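(* There exists a countable two-dimensional subshift of finite type $X$ whose Cantor–Bendixson rank is at least $\omega$.
   Context: A two-dimensional subshift over a finite alphabet $S$ is a closed subset of $S^{\mathbb{Z}^2}$ (product topology) invariant under both coordinate shifts; it is of finite type (SFT) if it is the set of configurations avoiding a finite set of forbidden finite patterns. Derivatives: $X^{(0)} = X$, $X^{(\alpha+1)}$ is the set of non-isolated points of $X^{(\alpha)}$, and $X^{(\lambda)} = \bigcap_{\alpha<\lambda} X^{(\alpha)}$ for limit $\lambda$. The rank of $X$ is the least ordinal $\lambda$ with $X^{(\lambda)} = X^{(\lambda+1)}$. *)

(* Defs.v *)
From Stdlib Require Import ZArith List.
Import ListNotations.
Open Scope Z_scope.

Definition config (A : Type) : Type := Z * Z -> A.

Definition finite_type (A : Type) : Prop := exists l : list A, forall a : A, In a l.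

Record pattern (A : Type) : Type := Pattern {
  pdom : list (Z * Z);
  pval : Z * Z -> A }.
Arguments pdom {A} _.
Arguments pval {A} _.

Definition occurs {A : Type} (x : config A) (p : pattern A) (v : Z * Z) : Prop :=
  forall u, In u (pdom p) -> x (fst v + fst u, snd v + snd u) = pval p u.

Definition SFT {A : Type} (F : list (pattern A)) : config A -> Prop :=
  fun x => forall p, In p F -> forall v, ~ occurs x p v.

(* x and y agree on the box [-N,N]^2 (basic cylinder neighbourhoods of the
   product topology, the alphabet being discrete). *)
Definition agree_box {A : Type} (N : Z) (x y : config A) : Prop :=
  forall i j, Z.abs i <= N -> Z.abs j <= N -> x (i, j) = y (i, j).

Definition isolated {A : Type} (Y : config A -> Prop) (x : config A) : Prop :=
  Y x /\ exists N, forall y, Y y -> agree_box N x y -> forall z, y z = x z.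

Fixpoint deriv {A : Type} (Y : config A -> Prop) (n : nat) : config A -> Prop :=
  match n with
  | O => Y
  | S m => fun x => deriv Y m x /\ ~ isolated (deriv Y m) x
  end.

Definition countable_set {A : Type} (Y : config A -> Prop) : Prop :=
  exists f : nat -> config A, forall x, Y x -> exists k, forall z, f k z = x z.

(* Main.v *)
Require Import Defs.
From Stdlib Require Import ZArith List Lia Bool Classical ClassicalEpsilon Cantor.
Import ListNotations.
Open Scope Z_scope.

Inductive sym : Type := B | Hl | F | Hb | Be | Hg | Om | La | Up | Tl | Tu | Ar | Apex | Mt | Mg | HL | HU | HX | LLla | LLom | LMla | LMom | LUaM | LUup | LUaA | LUom.
Definition Wl : list (sym*sym*sym*sym) := [
(B,B,B,B);
(B,B,Hl,Hl);
(B,B,Hl,F);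
(B,B,F,Hb);
(B,B,Hb,Hb);
(B,B,Hb,Be);
(B,B,Be,Hg);
(B,B,Hg,F);
(B,B,Hg,Hg);
(Hl,Hl,Om,Om);
(Hl,F,Om,LLom);
(Hl,F,Om,LMom);
(F,Hb,LLla,Tl);
(F,Hb,LLom,Tl);
(F,Hb,LMla,Mt);
(F,Hb,LMom,Mt);
(Hb,Hb,Tl,Tl);
(Hb,Hb,Tl,HL);
(Hb,Hb,Mt,Mt);
(Hb,Hb,Mt,HX);
(Hb,Be,HL,La);
(Hb,Be,HX,Mg);
(Be,Hg,La,La);
(Be,Hg,Mg,Mg);
(Hg,F,La,LLla);
(Hg,F,La,LMla);
(Hg,Hg,La,La);
(Hg,Hg,Mg,Mg);
(Om,Om,Om,Om);
(Om,Apex,Om,Om);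
(Om,LLom,Om,LLom);
(Om,LLom,Om,LMom);
(Om,LMom,Om,LUom);
(Om,LUom,Om,Apex);
(Om,LUom,Om,LUom);
(La,La,La,La);
(La,La,Mg,Mg);
(La,LLla,La,LLla);
(La,LLla,La,LMla);
(La,LMla,Mg,LUaM);
(Up,Up,Up,Up);
(Up,Up,Ar,Ar);
(Up,LUup,Up,LUup);
(Up,LUup,Ar,LUaA);
(Tl,Tl,Tl,Tl);
(Tl,Tl,Tl,HL);
(Tl,Tl,Mt,Mt);
(Tl,Tl,Mt,HX);
(Tl,HL,HL,La);
(Tl,HL,HX,Mg);
(Tu,Tu,Tu,Tu);
(Tu,Tu,Tu,HU);
(Tu,HU,HU,Up);
(Ar,Ar,Om,Om);
(Ar,LUaA,Om,Apex);
(Apex,Ar,Om,Om);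
(Mt,Mt,Tu,Tu);
(Mt,Mt,Tu,HU);
(Mt,HX,HU,Up);
(Mg,Mg,Up,Up);
(Mg,LUaM,Up,LUup);
(HL,La,La,La);
(HL,La,Mg,Mg);
(HU,Up,Up,Up);
(HU,Up,Ar,Ar);
(HX,Mg,Up,Up);
(LLla,Tl,LLla,Tl);
(LLla,Tl,LMla,Mt);
(LLom,Tl,LLom,Tl);
(LLom,Tl,LMom,Mt);
(LMla,Mt,LUaM,Tu);
(LMom,Mt,LUom,Tu);
(LMom,Mt,LUom,HU);
(LUaM,Tu,LUup,Tu);
(LUup,Tu,LUup,Tu);
(LUup,Tu,LUaA,HU);
(LUaA,HU,Apex,Ar);
(LUom,Tu,LUom,Tu);
(LUom,Tu,LUom,HU);
(LUom,HU,Apex,Ar)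
].


Scheme Equality for sym.

Definition syms : list sym := [B; Hl; F; Hb; Be; Hg; Om; La; Up; Tl; Tu; Ar; Apex; Mt; Mg; HL; HU; HX; LLla; LLom; LMla; LMom; LUaM; LUup; LUaA; LUom].

Lemma syms_all : forall s, In s syms.
Proof. destruct s; simpl; tauto. Qed.

Definition weq (w1 w2 : sym*sym*sym*sym) : bool :=
  match w1, w2 with (a,b,c,d), (a',b',c',d') =>
    sym_beq a a' && sym_beq b b' && sym_beq c c' && sym_beq d d' end.

Lemma weq_spec : forall w1 w2, weq w1 w2 = true <-> w1 = w2.
Proof.
  intros [[[a b] c] d] [[[a' b'] c'] d']; unfold weq; split.
  - intro H. repeat (apply andb_prop in H; destruct H as [H ?]).
    repeat match goal with H : sym_beq _ _ = true |- _ => apply internal_sym_dec_bl in H end; subst; reflexivity.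
  - intro H; inversion H; subst. repeat rewrite internal_sym_dec_lb by reflexivity. reflexivity.
Qed.

Definition inW (w : sym*sym*sym*sym) : bool := existsb (weq w) Wl.

Lemma inW_spec : forall w, inW w = true <-> In w Wl.
Proof.
  intro w; unfold inW; rewrite existsb_exists; split.
  - intros [w' [H1 H2]]. apply weq_spec in H2; subst; auto.
  - intro H; exists w; split; auto. apply weq_spec; reflexivity.
Qed.

Definition win (x : config sym) (v : Z*Z) : sym*sym*sym*sym :=
  let (i,j) := v in (x (i,j), x (i+1,j), x (i,j+1), x (i+1,j+1)).

Definition valid (x : config sym) : Prop := forall i j, inW (win x (i,j)) = true.

Definition cells4 : list (Z*Z) := [(0,0);(1,0);(0,1);(1,1)].

Definition mkpat (w : sym*sym*sym*sym) : pattern sym :=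
  match w with (a,b,c,d) =>
    Pattern sym cells4 (fun u => if Z.eqb (fst u) 0 then (if Z.eqb (snd u) 0 then a else c)
                             else (if Z.eqb (snd u) 0 then b else d)) end.

Definition allw : list (sym*sym*sym*sym) :=
  list_prod (list_prod (list_prod syms syms) syms) syms.

Lemma allw_all : forall w, In w allw.
Proof.
  intros [[[a b] c] d]; unfold allw; repeat apply in_prod; apply syms_all.
Qed.

Lemma occurs_mkpat : forall x w i j, occurs x (mkpat w) (i,j) <-> win x (i,j) = w.
Proof.
  intros x [[[a b] c] d] i j; unfold occurs, mkpat, win; simpl; split.
  - intro H.
    pose proof (H (0,0) ltac:(simpl; auto)) as H1.
    pose proof (H (1,0) ltac:(simpl; auto)) as H2.
    pose proof (H (0,1) ltac:(simpl; auto)) as H3.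
    pose proof (H (1,1) ltac:(simpl; auto)) as H4.
    simpl in *. rewrite !Z.add_0_r in *. rewrite H1, H2, H3, H4. reflexivity.
  - intros H u Hu. inversion H; subst.
    simpl in Hu; destruct Hu as [<-|[<-|[<-|[<-|[]]]]]; simpl; rewrite ?Z.add_0_r; reflexivity.
Qed.

Lemma Fs_exists : { L : list (pattern sym) | forall p, In p L <-> exists w, p = mkpat w /\ inW w = false }.
Proof.
  exists (map mkpat (filter (fun w => negb (inW w)) allw)). intro p. split.
  - intro Hp. pose proof (proj1 (in_map_iff mkpat (filter (fun w => negb (inW w)) allw) p) Hp) as Hq.
    destruct Hq as [w [Hw1 Hw]].
    pose proof (proj1 (filter_In (fun w => negb (inW w)) w allw) Hw) as [_ Hw'].
    exists w; split. symmetry; exact Hw1.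
    destruct (inW w); [discriminate|reflexivity].
  - intros [w [-> E]]. apply (in_map mkpat (filter (fun w => negb (inW w)) allw) w).
    apply (proj2 (filter_In (fun w => negb (inW w)) w allw)). split. apply allw_all.
    rewrite E; reflexivity.
Qed.

Definition Fs : list (pattern sym) := proj1_sig Fs_exists.

Lemma Fs_in : forall w, inW w = false -> In (mkpat w) Fs.
Proof. intros w E. apply (proj2_sig Fs_exists). exists w; auto. Qed.

Lemma Fs_in_inv : forall p, In p Fs -> exists w, p = mkpat w /\ inW w = false.
Proof. intros p Hp. apply (proj2_sig Fs_exists). exact Hp. Qed.

Lemma SFT_valid : forall x, SFT Fs x <-> valid x.
Proof.
  intro x; unfold SFT, valid; split.
  - intros H i j. destruct (inW (win x (i,j))) eqn:E; auto.
    exfalso. apply (H (mkpat (win x (i,j))) (Fs_in _ E) (i,j)).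
    apply occurs_mkpat. reflexivity.
  - intros H p Hp [i j] Hocc. destruct (Fs_in_inv p Hp) as [w [-> Hw]].
    apply occurs_mkpat in Hocc. rewrite <- Hocc in Hw. rewrite H in Hw. discriminate.
Qed.

Lemma fin_sym : finite_type sym.
Proof. exists syms. apply syms_all. Qed.

Definition closedP {A : Type} (Y : config A -> Prop) : Prop :=
  forall x, (forall N, exists y, Y y /\ agree_box N x y) -> Y x.

Lemma agree_box_mono {A} : forall N N' (x y : config A), N' <= N -> agree_box N x y -> agree_box N' x y.
Proof. unfold agree_box; intros; apply H0; lia. Qed.

Lemma agree_box_sym {A} : forall N (x y : config A), agree_box N x y -> agree_box N y x.
Proof. unfold agree_box; intros; symmetry; auto. Qed.

Lemma agree_box_trans {A} : forall N (x y z : config A), agree_box N x y -> agree_box N y z -> agree_box N x z.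
Proof. unfold agree_box; intros. rewrite H; auto. Qed.

Lemma deriv_sub {A} (Y : config A -> Prop) : forall n x, deriv Y (S n) x -> deriv Y n x.
Proof. intros n x [H _]; exact H. Qed.

Lemma deriv_sub0 {A} (Y : config A -> Prop) : forall n x, deriv Y n x -> Y x.
Proof. induction n; simpl; intros x H; auto. apply IHn, H. Qed.

Lemma deriv_closed {A} (Y : config A -> Prop) : closedP Y -> forall n, closedP (deriv Y n).
Proof.
  intros HY n; induction n; simpl; auto.
  intros x Hx.
  assert (Hn : deriv Y n x).
  { apply IHn. intro N. destruct (Hx N) as [y [[Hy _] Ha]]. exists y; auto. }
  split; auto.
  intros [_ [N0 HN0]].
  destruct (Hx N0) as [y [[Hy Hyni] Ha]].
  apply Hyni. split; auto. exists N0.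
  intros z Hz Hza w.
  assert (E : forall w, y w = x w).
  { intro w'. apply (HN0 y Hy Ha w'). }
  assert (Hxz : agree_box N0 x z).
  { intros i j Hi Hj. rewrite <- E. apply Hza; auto. }
  rewrite (HN0 z Hz Hxz w). symmetry. apply E.
Qed.

(* the perfect-set argument *)
Section Perf.
Context {A : Type} (Y Y' : config A -> Prop) (f : nat -> config A).
Hypothesis Hcl : closedP Y'.
Hypothesis Hni : forall x, Y' x -> ~ isolated Y' x.
Hypothesis Hsub : forall x, Y' x -> Y x.
Hypothesis Hf : forall x, Y x -> exists k, forall z, f k z = x z.

Definition st := ({z : config A | Y' z} * Z)%type.

Lemma step_ex0 : forall (s : st) (k : nat), exists s' : st,
  agree_box (snd s) (proj1_sig (fst s)) (proj1_sig (fst s')) /\ snd s' >= snd s + 1 /\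
  exists w : Z*Z, Z.abs (fst w) <= snd s' /\ Z.abs (snd w) <= snd s' /\ proj1_sig (fst s') w <> f k w.
Proof.
  intros [[z Hz] N] k. simpl.
  assert (H1 : exists y, Y' y /\ agree_box N z y /\ exists w, y w <> z w).
  { apply NNPP; intro Hc. apply (Hni z Hz). split; auto. exists N.
    intros y Hy Ha w. apply NNPP; intro Hw. apply Hc. exists y; repeat split; auto. exists w; auto. }
  destruct H1 as [y [Hy [Ha [w Hw]]]].
  destruct (classic (exists w', z w' <> f k w')) as [[w' Hw']|Hn].
  - exists (exist _ z Hz, Z.max (N+1) (Z.max (Z.abs (fst w')) (Z.abs (snd w')))); simpl.
    split. intros i j _ _; reflexivity. split. lia.
    exists w'; repeat split; auto; lia.
  - exists (exist _ y Hy, Z.max (N+1) (Z.max (Z.abs (fst w)) (Z.abs (snd w)))); simpl.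
    split. auto. split. lia.
    exists w; repeat split; try lia.
    intro E. apply Hn. exists w. rewrite <- E. auto.
Qed.

Definition step (s : st) (k : nat) : st := proj1_sig (constructive_indefinite_description _ (step_ex0 s k)).

Lemma step_spec : forall s k,
  agree_box (snd s) (proj1_sig (fst s)) (proj1_sig (fst (step s k))) /\ snd (step s k) >= snd s + 1 /\
  exists w : Z*Z, Z.abs (fst w) <= snd (step s k) /\ Z.abs (snd w) <= snd (step s k) /\ proj1_sig (fst (step s k)) w <> f k w.
Proof. intros s k. unfold step. destruct (constructive_indefinite_description _ _) as [s' H]. exact H. Qed.

Fixpoint seqs (s0 : st) (k : nat) : st :=
  match k with O => s0 | S k' => step (seqs s0 k') k' end.

Lemma perfect_false : (exists x, Y' x) -> False.
Proof.
  intros [x0 Hx0].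
  set (s0 := (exist _ x0 Hx0, 0) : st).
  set (zz := fun k => proj1_sig (fst (seqs s0 k))).
  set (NN := fun k => snd (seqs s0 k)).
  assert (HN : forall k, NN k >= Z.of_nat k).
  { induction k. unfold NN; simpl; lia. unfold NN in *; simpl.
    destruct (step_spec (seqs s0 k) k) as [_ [H _]]. lia. }
  assert (HNm : forall k m, (k <= m)%nat -> NN k <= NN m).
  { intros k m Hkm; induction Hkm. lia. unfold NN in *; simpl.
    destruct (step_spec (seqs s0 m) m) as [_ [H _]]. lia. }
  assert (Hag : forall k m, (k <= m)%nat -> agree_box (NN k) (zz k) (zz m)).
  { intros k m Hkm; induction Hkm. intros i j _ _; reflexivity.
    apply agree_box_trans with (zz m); auto.
    apply agree_box_mono with (NN m). apply HNm; auto.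
    unfold zz, NN; simpl. apply (proj1 (step_spec (seqs s0 m) m)). }
  set (lim := fun w : Z*Z => zz (Z.to_nat (Z.max (Z.abs (fst w)) (Z.abs (snd w)))) w).
  assert (Hlim : forall k, agree_box (NN k) lim (zz k)).
  { intros k i j Hi Hj. unfold lim; simpl.
    set (K := Z.to_nat (Z.max (Z.abs i) (Z.abs j))).
    destruct (Nat.le_ge_cases K k) as [Hk|Hk].
    - apply (Hag K k Hk); pose proof (HN K); unfold K in *; lia.
    - symmetry. apply (Hag k K Hk); auto. }
  assert (HY' : Y' lim).
  { apply Hcl. intro N. exists (zz (Z.to_nat N)). split. unfold zz; apply (proj2_sig (fst (seqs s0 _))).
    apply agree_box_mono with (NN (Z.to_nat N)). pose proof (HN (Z.to_nat N)); lia. apply Hlim. }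
  destruct (Hf lim (Hsub _ HY')) as [k Hk].
  destruct (step_spec (seqs s0 k) k) as [_ [_ [w [Hw1 [Hw2 Hw3]]]]].
  apply Hw3. rewrite Hk.
  assert (E := Hlim (S k) (fst w) (snd w)). unfold zz, NN in E; simpl in E.
  destruct w as [wi wj]; simpl in *. symmetry. apply E; lia.
Qed.
End Perf.

Lemma main_generic {A : Type} (Y : config A -> Prop) :
  closedP Y -> countable_set Y -> (forall n, exists x, deriv Y n x) ->
  forall n, ~ (forall x, deriv Y n x <-> deriv Y (S n) x).
Proof.
  intros Hcl [f Hf] Hne n Heq.
  apply (perfect_false Y (deriv Y n) f (deriv_closed Y Hcl n)).
  - intros x Hx. apply Heq in Hx. destruct Hx as [_ H]; exact H.
  - apply deriv_sub0.
  - exact Hf.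
  - apply Hne.
Qed.

Lemma Z_ind_up (P : Z -> Prop) (a : Z) : P a -> (forall y, a <= y -> P y -> P (y+1)) -> forall y, a <= y -> P y.
Proof.
  intros H0 HS y Hy. replace y with (a + Z.of_nat (Z.to_nat (y - a))) by lia.
  induction (Z.to_nat (y - a)) as [|n IH]. simpl. rewrite Z.add_0_r. exact H0.
  rewrite Nat2Z.inj_succ. replace (a + Z.succ (Z.of_nat n)) with (a + Z.of_nat n + 1) by lia.
  apply HS; auto. lia.
Qed.

Lemma Z_ind_down (P : Z -> Prop) (a : Z) : P a -> (forall y, y <= a -> P y -> P (y-1)) -> forall y, y <= a -> P y.
Proof.
  intros H0 HS y Hy. replace y with (a - Z.of_nat (Z.to_nat (a - y))) by lia.
  induction (Z.to_nat (a - y)) as [|n IH]. simpl. rewrite Z.sub_0_r. exact H0.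
  rewrite Nat2Z.inj_succ. replace (a - Z.succ (Z.of_nat n)) with (a - Z.of_nat n - 1) by lia.
  apply HS; auto. lia.
Qed.

Lemma min_above (Q : Z -> Prop) (p : Z) : (exists q, p < q /\ Q q) ->
  exists q0, p < q0 /\ Q q0 /\ forall q, p < q -> q < q0 -> ~ Q q.
Proof.
  intros [q [Hpq HQ]].
  assert (H : forall n q, (Z.to_nat (q - p) <= n)%nat -> p < q -> Q q ->
    exists q0, p < q0 /\ Q q0 /\ forall q', p < q' -> q' < q0 -> ~ Q q').
  { induction n; intros q1 Hn Hpq1 HQ1. lia.
    destruct (classic (exists q', p < q' /\ q' < q1 /\ Q q')) as [[q' [H1 [H2 H3]]]|Hno].
    - apply (IHn q'); auto. lia.
    - exists q1. repeat split; auto. intros q' H1 H2 H3. apply Hno; eauto. }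
  apply (H (Z.to_nat (q - p)) q); auto.
Qed.

Lemma max_below (Q : Z -> Prop) (q : Z) : (exists p, p < q /\ Q p) ->
  exists p0, p0 < q /\ Q p0 /\ forall p, p0 < p -> p < q -> ~ Q p.
Proof.
  intros [p [Hpq HQ]].
  assert (H : forall n p, (Z.to_nat (q - p) <= n)%nat -> p < q -> Q p ->
    exists p0, p0 < q /\ Q p0 /\ forall p', p0 < p' -> p' < q -> ~ Q p').
  { induction n; intros p1 Hn Hpq1 HQ1. lia.
    destruct (classic (exists p', p1 < p' /\ p' < q /\ Q p')) as [[p' [H1 [H2 H3]]]|Hno].
    - apply (IHn p'); auto. lia.
    - exists p1. repeat split; auto. intros p' H1 H2 H3. apply Hno; eauto. }
  apply (H (Z.to_nat (q - p)) p); auto.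
Qed.

Lemma max_ex (Q : Z -> Prop) : (exists p, Q p) -> (exists b, forall p, Q p -> p <= b) ->
  exists m, Q m /\ forall p, Q p -> p <= m.
Proof.
  intros [p HQ] [b Hb].
  destruct (classic (exists q, p < q /\ Q q)) as [Hq|Hq].
  - assert (H : forall n q, (Z.to_nat (b - q) <= n)%nat -> Q q -> exists m, Q m /\ forall p, Q p -> p <= m).
    { induction n; intros q1 Hn HQ1.
      - exists q1; split; auto. intros p' Hp'. pose proof (Hb p' Hp'). pose proof (Hb q1 HQ1). lia.
      - destruct (classic (exists q', q1 < q' /\ Q q')) as [[q' [H1 H2]]|Hno].
        + apply (IHn q'); auto. specialize (Hb q' H2). lia.
        + exists q1; split; auto. intros p' Hp'. destruct (Z.le_gt_cases p' q1); auto.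
          exfalso; apply Hno; eauto. }
    apply (H (Z.to_nat (b - p)) p); auto.
  - exists p; split; auto. intros p' Hp'. destruct (Z.le_gt_cases p' p); auto.
    exfalso; apply Hq; eauto.
Qed.

Definition finiteS {T : Type} (S : T -> Prop) : Prop := exists l : list T, forall t, S t -> In t l.

Fixpoint zrange (a : Z) (n : nat) : list Z :=
  match n with O => [] | S n' => a :: zrange (a+1) n' end.

Lemma zrange_in : forall n a z, a <= z < a + Z.of_nat n -> In z (zrange a n).
Proof.
  induction n; intros a z H; simpl in *. lia.
  destruct (Z.eq_dec a z). left; auto. right. apply IHn. lia.
Qed.

Lemma box_finite : forall a b c d, finiteS (fun p : Z*Z => a <= fst p <= b /\ c <= snd p <= d).
Proof.
  intros a b c d. exists (list_prod (zrange a (Z.to_nat (b - a + 1))) (zrange c (Z.to_nat (d - c + 1)))).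
  intros [i j] [H1 H2]; simpl in *. apply in_prod; apply zrange_in; lia.
Qed.

Lemma finite_union {T} : forall (S1 S2 : T -> Prop), finiteS S1 -> finiteS S2 -> finiteS (fun t => S1 t \/ S2 t).
Proof.
  intros S1 S2 [l1 H1] [l2 H2]. exists (l1 ++ l2). intros t [H|H]; apply in_or_app; auto.
Qed.

Lemma finite_sub {T} : forall (S1 S2 : T -> Prop), finiteS S2 -> (forall t, S1 t -> S2 t) -> finiteS S1.
Proof. intros S1 S2 [l H] Hs. exists l. auto. Qed.

Lemma finite_atmost1 {T} : forall (S : T -> Prop), (forall t t', S t -> S t' -> t = t') -> finiteS S.
Proof.
  intros S H. destruct (classic (exists t, S t)) as [[t Ht]|Hn].
  - exists [t]. intros t' Ht'. left. symmetry. apply H; auto.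
  - exists []. intros t Ht. apply Hn; eauto.
Qed.

Definition hpairs : list (sym*sym) := flat_map (fun w => match w with (a,b,c,d) => [(a,b);(c,d)] end) Wl.
Definition vpairs : list (sym*sym) := flat_map (fun w => match w with (a,b,c,d) => [(a,c);(b,d)] end) Wl.
Definition dpairs : list (sym*sym) := map (fun w => match w with (a,b,c,d) => (c,b) end) Wl.

Lemma valid_in : forall x i j, valid x -> In (win x (i,j)) Wl.
Proof. intros x i j H. apply inW_spec. apply H. Qed.

Lemma valid_h : forall x i j, valid x -> In (x (i,j), x (i+1,j)) hpairs.
Proof.
  intros x i j H. pose proof (valid_in x i j H) as Hw. unfold hpairs. apply in_flat_map.
  exists (win x (i,j)). split; auto. simpl; auto.
Qed.

Lemma valid_v : forall x i j, valid x -> In (x (i,j), x (i,j+1)) vpairs.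
Proof.
  intros x i j H. pose proof (valid_in x i j H) as Hw. unfold vpairs. apply in_flat_map.
  exists (win x (i,j)). split; auto. simpl; auto.
Qed.

Lemma valid_d : forall x i j, valid x -> In (x (i,j+1), x (i+1,j)) dpairs.
Proof.
  intros x i j H. pose proof (valid_in x i j H) as Hw. unfold dpairs.
  apply (in_map (fun w => match w with (a,b,c,d) => (c,b) end) _ _ Hw).
Qed.

Lemma fact_of : forall (P : sym -> sym -> bool) l a b,
  forallb (fun p => P (fst p) (snd p)) l = true -> In (a,b) l -> P a b = true.
Proof.
  intros P l a b H Hin. rewrite forallb_forall in H. apply (H (a,b) Hin).
Qed.

Definition isH (s : sym) : bool := match s with Hl|F|Hb|Be|Hg => true | _ => false end.
Definition isL8 (s : sym) : bool := match s with LLla|LLom|LMla|LMom|LUaM|LUup|LUaA|LUom => true | _ => false end.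
Definition isLL (s : sym) : bool := match s with LLla|LLom => true | _ => false end.
Definition isLM (s : sym) : bool := match s with LMla|LMom => true | _ => false end.
Definition isLU (s : sym) : bool := match s with LUaM|LUup|LUaA|LUom => true | _ => false end.
Definition isInt (s : sym) : bool := match s with Tl|Mt|Tu => true | _ => false end.
Definition isHyp (s : sym) : bool := match s with HL|HU|HX => true | _ => false end.
Definition legS (s : sym) : bool := isL8 s || sym_beq s F || sym_beq s Apex.
Definition evW (s : sym) : bool := legS s || sym_beq s Be.

Lemma sbeq : forall a b, sym_beq a b = true <-> a = b.
Proof. intros a b; split. apply internal_sym_dec_bl. apply internal_sym_dec_lb. Qed.

Definition fH (a b : sym) : bool :=
  Bool.eqb (isH a) (isH b) && Bool.eqb (sym_beq a B) (sym_beq b B)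
  && implb (sym_beq a Apex) (sym_beq b Ar)
  && implb (sym_beq a Ar) (sym_beq b Ar || sym_beq b LUaA)
  && implb (isLM a) (sym_beq b Mt || sym_beq b HX)
  && implb (sym_beq a Mt) (sym_beq b Mt || sym_beq b HX)
  && implb (sym_beq a HX) (sym_beq b Mg)
  && implb (sym_beq a Mg) (sym_beq b Mg || sym_beq b LUaM)
  && implb (isL8 a) (isInt b || isHyp b)
  && implb (isInt a) (isInt b || isHyp b)
  && implb (sym_beq a Be || sym_beq a Hg) (sym_beq b Hg || sym_beq b F)
  && implb (sym_beq b Be) (sym_beq a Hb)
  && implb (sym_beq b Hb) (sym_beq a Hb || sym_beq a F).

Definition fV (a c : sym) : bool :=
  implb (isH c) (sym_beq a B)
  && implb (sym_beq a B) (sym_beq c B || isH c)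
  && implb (sym_beq c B) (sym_beq a B)
  && implb (isH a) (negb (isH c) && negb (sym_beq c B))
  && implb (isL8 c) (isL8 a || sym_beq a F)
  && implb (sym_beq a F) (isLL c || isLM c)
  && implb (isL8 a) (isL8 c || sym_beq c Apex)
  && implb (sym_beq a Apex || sym_beq a Om) (sym_beq c Om)
  && implb (sym_beq c Apex) (isLM a || isLU a)
  && implb (isLL a) (isLL c || isLM c)
  && implb (isLM a || isLU a) (isLU c || sym_beq c Apex)
  && implb (sym_beq a LUaA) (sym_beq c Apex)
  && implb (sym_beq c LUaM) (sym_beq a LMla).

Definition fD (tl br : sym) : bool :=
  implb (isHyp br) (isHyp tl || sym_beq tl Apex)
  && implb (sym_beq tl Apex) (isHyp br)
  && implb (isHyp tl) (isHyp br || sym_beq br Be).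

Lemma fH_all : forallb (fun p => fH (fst p) (snd p)) hpairs = true.
Proof. vm_compute. reflexivity. Qed.
Lemma fV_all : forallb (fun p => fV (fst p) (snd p)) vpairs = true.
Proof. vm_compute. reflexivity. Qed.
Lemma fD_all : forallb (fun p => fD (fst p) (snd p)) dpairs = true.
Proof. vm_compute. reflexivity. Qed.

Lemma fH_x : forall x i j, valid x -> fH (x (i,j)) (x (i+1,j)) = true.
Proof. intros. apply (fact_of fH hpairs _ _ fH_all (valid_h x i j H)). Qed.
Lemma fV_x : forall x i j, valid x -> fV (x (i,j)) (x (i,j+1)) = true.
Proof. intros. apply (fact_of fV vpairs _ _ fV_all (valid_v x i j H)). Qed.
Lemma fD_x : forall x i j, valid x -> fD (x (i,j+1)) (x (i+1,j)) = true.
Proof. intros. apply (fact_of fD dpairs _ _ fD_all (valid_d x i j H)). Qed.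

Ltac ffin := simpl; first [ reflexivity | (left; reflexivity) | (right; reflexivity)
  | (right; right; reflexivity) | (split; [reflexivity|discriminate]) | discriminate | tauto ].

Ltac hfact x i j Hv := let Hf := fresh "Hf" in pose proof (fH_x x i j Hv) as Hf;
  destruct (x (i,j)); try discriminate; destruct (x (i+1,j)); simpl in Hf; try discriminate; try ffin.
Ltac vfact x i j Hv := let Hf := fresh "Hf" in pose proof (fV_x x i j Hv) as Hf;
  destruct (x (i,j)); try discriminate; destruct (x (i,j+1)); simpl in Hf; try discriminate; try ffin.
Ltac dfact x i j Hv := let Hf := fresh "Hf" in pose proof (fD_x x i j Hv) as Hf;
  destruct (x (i,j+1)); try discriminate; destruct (x (i+1,j)); simpl in Hf; try discriminate; try ffin.

Section FactsS.
Variable x : config sym.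
Hypothesis Hv : valid x.

Lemma FH_H : forall i j, isH (x (i,j)) = isH (x (i+1,j)).
Proof. intros i j. hfact x i j Hv. Qed.
Lemma FH_B : forall i j, x (i,j) = B <-> x (i+1,j) = B.
Proof. intros i j. hfact x i j Hv; split; intro; discriminate. Qed.
Lemma FH_Apex : forall i j, x (i,j) = Apex -> x (i+1,j) = Ar.
Proof. intros i j H. hfact x i j Hv. Qed.
Lemma FH_Ar : forall i j, x (i,j) = Ar -> x (i+1,j) = Ar \/ x (i+1,j) = LUaA.
Proof. intros i j H. hfact x i j Hv. Qed.
Lemma FH_LM : forall i j, isLM (x (i,j)) = true -> x (i+1,j) = Mt \/ x (i+1,j) = HX.
Proof. intros i j H. hfact x i j Hv. Qed.
Lemma FH_Mt : forall i j, x (i,j) = Mt -> x (i+1,j) = Mt \/ x (i+1,j) = HX.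
Proof. intros i j H. hfact x i j Hv. Qed.
Lemma FH_HX : forall i j, x (i,j) = HX -> x (i+1,j) = Mg.
Proof. intros i j H. hfact x i j Hv. Qed.
Lemma FH_Mg : forall i j, x (i,j) = Mg -> x (i+1,j) = Mg \/ x (i+1,j) = LUaM.
Proof. intros i j H. hfact x i j Hv. Qed.
Lemma FH_L8 : forall i j, isL8 (x (i,j)) = true -> isInt (x (i+1,j)) || isHyp (x (i+1,j)) = true.
Proof. intros i j H. hfact x i j Hv. Qed.
Lemma FH_Int : forall i j, isInt (x (i,j)) = true -> isInt (x (i+1,j)) || isHyp (x (i+1,j)) = true.
Proof. intros i j H. hfact x i j Hv. Qed.
Lemma FH_BeHg : forall i j, x (i,j) = Be \/ x (i,j) = Hg -> x (i+1,j) = Hg \/ x (i+1,j) = F.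
Proof. intros i j [H|H]; hfact x i j Hv. Qed.
Lemma FH_Be_l : forall i j, x (i+1,j) = Be -> x (i,j) = Hb.
Proof. intros i j H. hfact x i j Hv. Qed.
Lemma FH_Hb_l : forall i j, x (i+1,j) = Hb -> x (i,j) = Hb \/ x (i,j) = F.
Proof. intros i j H. hfact x i j Hv. Qed.

Lemma FV_H : forall i j, isH (x (i,j+1)) = true -> x (i,j) = B.
Proof. intros i j H. vfact x i j Hv. Qed.
Lemma FV_B : forall i j, x (i,j) = B -> x (i,j+1) = B \/ isH (x (i,j+1)) = true.
Proof. intros i j H. vfact x i j Hv. Qed.
Lemma FV_B2 : forall i j, x (i,j+1) = B -> x (i,j) = B.
Proof. intros i j H. vfact x i j Hv. Qed.
Lemma FV_Hup : forall i j, isH (x (i,j)) = true -> isH (x (i,j+1)) = false /\ x (i,j+1) <> B.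
Proof. intros i j H. vfact x i j Hv. Qed.
Lemma FV_L8dn : forall i j, isL8 (x (i,j+1)) = true -> isL8 (x (i,j)) = true \/ x (i,j) = F.
Proof. intros i j H. vfact x i j Hv. Qed.
Lemma FV_F : forall i j, x (i,j) = F -> isLL (x (i,j+1)) || isLM (x (i,j+1)) = true.
Proof. intros i j H. vfact x i j Hv. Qed.
Lemma FV_L8up : forall i j, isL8 (x (i,j)) = true -> isL8 (x (i,j+1)) = true \/ x (i,j+1) = Apex.
Proof. intros i j H. vfact x i j Hv. Qed.
Lemma FV_Om : forall i j, x (i,j) = Apex \/ x (i,j) = Om -> x (i,j+1) = Om.
Proof. intros i j [H|H]; vfact x i j Hv. Qed.
Lemma FV_Apexdn : forall i j, x (i,j+1) = Apex -> isLM (x (i,j)) || isLU (x (i,j)) = true.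
Proof. intros i j H. vfact x i j Hv. Qed.
Lemma FV_LL : forall i j, isLL (x (i,j)) = true -> isLL (x (i,j+1)) || isLM (x (i,j+1)) = true.
Proof. intros i j H. vfact x i j Hv. Qed.
Lemma FV_LMU : forall i j, isLM (x (i,j)) || isLU (x (i,j)) = true -> isLU (x (i,j+1)) = true \/ x (i,j+1) = Apex.
Proof. intros i j H. vfact x i j Hv. Qed.
Lemma FV_aA : forall i j, x (i,j) = LUaA -> x (i,j+1) = Apex.
Proof. intros i j H. vfact x i j Hv. Qed.
Lemma FV_aM : forall i j, x (i,j+1) = LUaM -> x (i,j) = LMla.
Proof. intros i j H. vfact x i j Hv. Qed.

Lemma FD1 : forall i j, isHyp (x (i+1,j)) = true -> isHyp (x (i,j+1)) = true \/ x (i,j+1) = Apex.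
Proof. intros i j H. dfact x i j Hv. Qed.
Lemma FD2 : forall i j, x (i,j+1) = Apex -> isHyp (x (i+1,j)) = true.
Proof. intros i j H. dfact x i j Hv. Qed.
Lemma FD3 : forall i j, isHyp (x (i,j+1)) = true -> isHyp (x (i+1,j)) = true \/ x (i+1,j) = Be.
Proof. intros i j H. dfact x i j Hv. Qed.
End FactsS.

Definition legcol (x : config sym) (p : Z) : Prop := exists y, legS (x (p,y)) = true.
Definition hrow (x : config sym) (h : Z) : Prop := exists i, isH (x (i,h)) = true.

Section St.
Variable x : config sym.
Hypothesis Hv : valid x.

Lemma X_hrow_full : forall i0 h, isH (x (i0,h)) = true -> forall i, isH (x (i,h)) = true.
Proof.
  intros i0 h H0 i. destruct (Z.le_gt_cases i0 i) as [Hi|Hi].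
  - apply (Z_ind_up (fun i => isH (x (i,h)) = true) i0); auto.
    intros y _ Hy. rewrite <- (FH_H x Hv y h). exact Hy.
  - apply (Z_ind_down (fun i => isH (x (i,h)) = true) i0); auto; try lia.
    intros y _ Hy. rewrite (FH_H x Hv (y-1) h). replace (y-1+1) with y by lia. exact Hy.
Qed.

Lemma X_below : forall h, hrow x h -> forall i y, y < h -> x (i,y) = B.
Proof.
  intros h [i0 H0] i y Hy. pose proof (X_hrow_full i0 h H0 i) as Hi.
  apply (Z_ind_down (fun y => x (i,y) = B) (h-1)); try lia.
  - apply (FV_H x Hv). replace (h-1+1) with h by lia. exact Hi.
  - intros y' _ Hy'. apply (FV_B2 x Hv). replace (y'-1+1) with y' by lia. exact Hy'.
Qed.

Lemma X_above : forall h, hrow x h -> forall i y, h < y -> isH (x (i,y)) = false /\ x (i,y) <> B.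
Proof.
  intros h Hh i y Hy. destruct Hh as [i0 H0]. pose proof (X_hrow_full i0 h H0 i) as Hi.
  assert (Hn : x (i,y) <> B).
  { intro HB. assert (forall y', y' <= y -> x (i,y') = B).
    { apply (Z_ind_down (fun y' => x (i,y') = B) y); auto.
      intros y' _ Hy'. apply (FV_B2 x Hv). replace (y'-1+1) with y' by lia. exact Hy'. }
    rewrite (H h) in Hi by lia. discriminate. }
  split; auto.
  destruct (isH (x (i,y))) eqn:E; auto.
  exfalso. pose proof (X_below y (ex_intro _ i E) i h Hy) as HB. rewrite HB in Hi; discriminate.
Qed.

Lemma legS_H : forall s, legS s = true -> isH s = true -> s = F.
Proof. intros s H1 H2; destruct s; try discriminate; reflexivity. Qed.

Lemma X_legcol_F : forall h p, hrow x h -> legcol x p -> x (p,h) = F.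
Proof.
  intros h p Hh [y Hy].
  destruct (Z.lt_total y h) as [Hlt|[Heq|Hgt]].
  - rewrite (X_below h Hh p y Hlt) in Hy. discriminate.
  - subst y. apply legS_H; auto. destruct Hh as [i0 H0]. apply (X_hrow_full i0 h H0).
  - assert (Hd : forall y', h < y' <= y -> isL8 (x (p,y')) = true \/ x (p,y') = Apex).
    { intros y' Hy'.
      apply (Z_ind_down (fun y' => h < y' -> isL8 (x (p,y')) = true \/ x (p,y') = Apex) y); try lia.
      - intros _. destruct (x (p,y)) eqn:E; simpl in Hy; try discriminate; auto.
        exfalso. destruct (X_above h Hh p y Hgt) as [HH _]. rewrite E in HH; discriminate.
      - intros z Hz IH Hz'. destruct (IH ltac:(lia)) as [HL|HA].
        + left. destruct (FV_L8dn x Hv p (z-1) ltac:(replace (z-1+1) with z by lia; exact HL)) as [H|H]; auto.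
          exfalso. destruct (X_above h Hh p (z-1) Hz') as [HH _]. rewrite H in HH; discriminate.
        + left. pose proof (FV_Apexdn x Hv p (z-1) ltac:(replace (z-1+1) with z by lia; exact HA)) as H.
          destruct (x (p, z-1)); simpl in H; try discriminate; reflexivity. }
    destruct (Hd (h+1) ltac:(lia)) as [HL|HA].
    + destruct (FV_L8dn x Hv p h HL) as [H|H]; auto.
      exfalso. destruct Hh as [i0 H0]. pose proof (X_hrow_full i0 h H0 p) as HH.
      destruct (x (p,h)); simpl in H, HH; discriminate.
    + exfalso. pose proof (FV_Apexdn x Hv p h HA) as H. destruct Hh as [i0 H0].
      pose proof (X_hrow_full i0 h H0 p) as HH. destruct (x (p,h)); simpl in H, HH; discriminate.
Qed.

Lemma X_col_up : forall h p, hrow x h -> x (p,h) = F -> forall y, h < y ->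
  isL8 (x (p,y)) = true \/ x (p,y) = Apex \/ x (p,y) = Om.
Proof.
  intros h p Hh HF y Hy.
  apply (Z_ind_up (fun y => isL8 (x (p,y)) = true \/ x (p,y) = Apex \/ x (p,y) = Om) (h+1)); try lia.
  - left. pose proof (FV_F x Hv p h HF) as H. destruct (x (p,h+1)); simpl in H; try discriminate; reflexivity.
  - intros z _ [H|[H|H]].
    + destruct (FV_L8up x Hv p z H); auto.
    + right; right. apply (FV_Om x Hv p z); auto.
    + right; right. apply (FV_Om x Hv p z); auto.
Qed.

Lemma X_col_Om : forall p s, x (p,s) = Apex \/ x (p,s) = Om -> forall y, s < y -> x (p,y) = Om.
Proof.
  intros p s H y Hy.
  apply (Z_ind_up (fun y => x (p,y) = Om) (s+1)); try lia.
  - apply (FV_Om x Hv p s H).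
  - intros z _ Hz. apply (FV_Om x Hv p z); auto.
Qed.

Lemma X_apex_unique : forall p s s', x (p,s) = Apex -> x (p,s') = Apex -> s = s'.
Proof.
  intros p s s' H1 H2. destruct (Z.lt_total s s') as [Hl|[He|Hl]]; auto.
  - rewrite (X_col_Om p s (or_introl H1) s' Hl) in H2; discriminate.
  - rewrite (X_col_Om p s' (or_introl H2) s Hl) in H1; discriminate.
Qed.

Lemma apex_above : forall h p s, hrow x h -> x (p,s) = Apex -> h < s.
Proof.
  intros h p s Hh H. destruct (Z.lt_total h s) as [Hl|[He|Hl]]; auto.
  - subst. destruct Hh as [i0 H0]. pose proof (X_hrow_full i0 s H0 p). rewrite H in H1; discriminate.
  - rewrite (X_below h Hh p s Hl) in H; discriminate.
Qed.

Lemma interior_prop : forall p lo, (forall y, lo < y -> isL8 (x (p,y)) = true) ->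
  forall z, p + 1 <= z -> forall y, lo < y -> isInt (x (z,y)) = true.
Proof.
  intros p lo HL z Hz.
  apply (Z_ind_up (fun z => forall y, lo < y -> isInt (x (z,y)) = true) (p+1)); auto.
  - intros y Hy. pose proof (FH_L8 x Hv p y (HL y Hy)) as H.
    destruct (isInt (x (p+1,y))) eqn:E; auto. simpl in H.
    destruct (FD1 x Hv p y H) as [H1|H1].
    + pose proof (HL (y+1) ltac:(lia)). destruct (x (p,y+1)); simpl in *; discriminate.
    + pose proof (HL (y+1) ltac:(lia)). rewrite H1 in H0; discriminate.
  - intros z' Hz' IH y Hy. pose proof (FH_Int x Hv z' y (IH y Hy)) as H.
    destruct (isInt (x (z'+1,y))) eqn:E; auto. simpl in H.
    destruct (FD1 x Hv z' y H) as [H1|H1].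
    + pose proof (IH (y+1) ltac:(lia)). destruct (x (z',y+1)); simpl in *; discriminate.
    + pose proof (IH (y+1) ltac:(lia)). rewrite H1 in H0; discriminate.
Qed.

Lemma M1 : forall h p q, hrow x h -> legcol x p -> legcol x q -> p < q -> exists s, h < s /\ x (p,s) = Apex.
Proof.
  intros h p q Hh Hp Hq Hpq. apply NNPP; intro Hn.
  pose proof (X_legcol_F h p Hh Hp) as Fp. pose proof (X_legcol_F h q Hh Hq) as Fq.
  assert (HL : forall y, h < y -> isL8 (x (p,y)) = true).
  { intros y Hy. apply (Z_ind_up (fun y => isL8 (x (p,y)) = true) (h+1)); try lia.
    - pose proof (FV_F x Hv p h Fp) as H. destruct (x (p,h+1)); simpl in H; try discriminate; reflexivity.
    - intros z Hz Hzl. destruct (FV_L8up x Hv p z Hzl); auto. exfalso; apply Hn; exists (z+1); split; auto; lia. }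
  pose proof (interior_prop p h HL q ltac:(lia) (h+1) ltac:(lia)) as HI.
  pose proof (FV_F x Hv q h Fq) as H. destruct (x (q,h+1)); simpl in H, HI; discriminate.
Qed.

Lemma col_not_ray : forall h q y, hrow x h -> x (q,h) = F -> h < y ->
  x (q,y) <> Ar /\ x (q,y) <> Mt /\ x (q,y) <> HX /\ x (q,y) <> Mg.
Proof.
  intros h q y Hh HF Hy. destruct (X_col_up h q Hh HF y Hy) as [H|[H|H]];
  [destruct (x (q,y)); simpl in H; try discriminate|rewrite H|rewrite H]; repeat split; discriminate.
Qed.

Lemma M2 : forall h p q s, hrow x h -> legcol x p -> legcol x q -> p < q ->
  (forall r, p < r < q -> ~ legcol x r) -> x (p,s) = Apex -> h < s -> x (q,s) = LUaA.
Proof.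
  intros h p q s Hh Hp Hq Hpq Hbt HA Hs.
  assert (H : forall z, p + 1 <= z -> z <= q -> x (z,s) = Ar \/ (x (z,s) = LUaA /\ z = q)).
  { intros z Hz. apply (Z_ind_up (fun z => z <= q -> x (z,s) = Ar \/ (x (z,s) = LUaA /\ z = q)) (p+1)); auto.
    - intros _. left. apply (FH_Apex x Hv p s HA).
    - intros z' Hz' IH Hz'q. destruct (IH ltac:(lia)) as [H1|[H1 H2]]; [|lia].
      destruct (FH_Ar x Hv z' s H1) as [H3|H3]; auto.
      right; split; auto. destruct (Z.eq_dec (z'+1) q); auto. exfalso.
      apply (Hbt (z'+1)). lia. exists s. rewrite H3; reflexivity. }
  destruct (H q ltac:(lia) ltac:(lia)) as [H1|[H1 _]]; auto.
  exfalso. pose proof (col_not_ray h q s Hh (X_legcol_F h q Hh Hq) Hs). tauto.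
Qed.

Lemma M3 : forall h p s, hrow x h -> x (p,h) = F -> x (p,s) = Apex -> exists m, h < m < s /\ isLM (x (p,m)) = true.
Proof.
  intros h p s Hh HF HA. pose proof (apex_above h p s Hh HA) as Hs.
  apply NNPP; intro Hn.
  assert (HL : forall y, h < y -> y < s -> isLL (x (p,y)) = true).
  { intros y Hy Hys. apply (Z_ind_up (fun y => y < s -> isLL (x (p,y)) = true) (h+1)); try lia.
    - intros Hs'. pose proof (FV_F x Hv p h HF) as H.
      destruct (isLL (x (p,h+1))) eqn:E; auto. simpl in H. exfalso; apply Hn; exists (h+1); split; auto; lia.
    - intros z Hz IH Hz'. pose proof (FV_LL x Hv p z (IH ltac:(lia))) as H.
      destruct (isLL (x (p,z+1))) eqn:E; auto. simpl in H. exfalso; apply Hn; exists (z+1); split; auto; lia. }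
  destruct (Z.eq_dec s (h+1)) as [E|E].
  - subst s. pose proof (FV_F x Hv p h HF) as H. rewrite HA in H. discriminate.
  - pose proof (HL (s-1) ltac:(lia) ltac:(lia)) as H1.
    pose proof (FV_Apexdn x Hv p (s-1) ltac:(replace (s-1+1) with s by lia; exact HA)) as H2.
    destruct (x (p,s-1)); simpl in H1, H2; discriminate.
Qed.

Lemma M4 : forall h p q m, hrow x h -> legcol x p -> legcol x q -> p < q ->
  (forall r, p < r < q -> ~ legcol x r) -> isLM (x (p,m)) = true -> h < m -> x (q,m) = LUaM.
Proof.
  intros h p q m Hh Hp Hq Hpq Hbt HM Hm.
  assert (H : forall z, p + 1 <= z -> z <= q ->
     x (z,m) = Mt \/ x (z,m) = HX \/ x (z,m) = Mg \/ (x (z,m) = LUaM /\ z = q)).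
  { intros z Hz. apply (Z_ind_up (fun z => z <= q -> x (z,m) = Mt \/ x (z,m) = HX \/ x (z,m) = Mg \/ (x (z,m) = LUaM /\ z = q)) (p+1)); auto.
    - intros _. destruct (FH_LM x Hv p m HM); auto.
    - intros z' Hz' IH Hz'q. destruct (IH ltac:(lia)) as [H1|[H1|[H1|[H1 H2]]]]; [| | |lia].
      + destruct (FH_Mt x Hv z' m H1); auto.
      + right; right; left. apply (FH_HX x Hv z' m H1).
      + destruct (FH_Mg x Hv z' m H1) as [H3|H3]; auto.
        right; right; right; split; auto. destruct (Z.eq_dec (z'+1) q); auto. exfalso.
        apply (Hbt (z'+1)). lia. exists m. rewrite H3; reflexivity. }
  destruct (H q ltac:(lia) ltac:(lia)) as [H1|[H1|[H1|[H1 _]]]]; auto;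
  exfalso; pose proof (col_not_ray h q m Hh (X_legcol_F h q Hh Hq) Hm); tauto.
Qed.

Lemma mark_above : forall h q m, hrow x h -> x (q,h) = F -> isL8 (x (q,m)) = true -> h < m.
Proof.
  intros h q m Hh HF H. destruct (Z.lt_total h m) as [Hl|[He|Hl]]; auto.
  - subst. rewrite HF in H; discriminate.
  - rewrite (X_below h Hh q m Hl) in H; discriminate.
Qed.

Lemma BA : forall h, hrow x h -> forall n p m, legcol x p -> isLM (x (p,m)) = true -> h < m ->
  m - h <= Z.of_nat n -> exists b, forall q, legcol x q -> p <= q -> q <= b.
Proof.
  intros h Hh n; induction n as [|n IH]; intros p m Hp HM Hm Hn. lia.
  destruct (classic (exists q, p < q /\ legcol x q)) as [Hex|Hno].
  - destruct (min_above (legcol x) p Hex) as [q0 [Hpq0 [Hq0 Hmin]]].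
    pose proof (M4 h p q0 m Hh Hp Hq0 Hpq0 (fun r Hr => Hmin r (proj1 Hr) (proj2 Hr)) HM Hm) as H4.
    pose proof (FV_aM x Hv q0 (m-1) ltac:(replace (m-1+1) with m by lia; exact H4)) as H5.
    assert (Hm1 : h < m - 1).
    { apply (mark_above h q0 (m-1) Hh (X_legcol_F h q0 Hh Hq0)). rewrite H5; reflexivity. }
    destruct (IH q0 (m-1) Hq0 ltac:(rewrite H5; reflexivity) Hm1 ltac:(rewrite Nat2Z.inj_succ in Hn; lia)) as [b Hb].
    exists (Z.max p b). intros q Hq Hpq. destruct (Z.eq_dec p q). lia.
    destruct (Z.lt_ge_cases q q0). exfalso; apply (Hmin q); auto; lia.
    specialize (Hb q Hq ltac:(lia)). lia.
  - exists p. intros q Hq Hpq. destruct (Z.eq_dec p q). lia. exfalso; apply Hno; exists q; split; auto; lia.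
Qed.

Lemma BB : forall h, hrow x h -> forall n q s, legcol x q -> x (q,s) = Apex ->
  s - h <= Z.of_nat n -> exists a, forall p, legcol x p -> p <= q -> a <= p.
Proof.
  intros h Hh n; induction n as [|n IH]; intros q s Hq HA Hn.
  - pose proof (apex_above h q s Hh HA). lia.
  - destruct (classic (exists p, p < q /\ legcol x p)) as [Hex|Hno].
    + destruct (max_below (legcol x) q Hex) as [p0 [Hp0q [Hp0 Hmax]]].
      destruct (M1 h p0 q Hh Hp0 Hq Hp0q) as [s0 [Hs0 HA0]].
      pose proof (M2 h p0 q s0 Hh Hp0 Hq Hp0q (fun r Hr => Hmax r (proj1 Hr) (proj2 Hr)) HA0 Hs0) as H2.
      pose proof (FV_aA x Hv q s0 H2) as H3.
      pose proof (X_apex_unique q s (s0+1) HA H3) as E.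
      destruct (IH p0 s0 Hp0 HA0 ltac:(rewrite Nat2Z.inj_succ in Hn; lia)) as [a Ha].
      exists (Z.min a q). intros p Hp Hpq. destruct (Z.eq_dec p q). lia.
      destruct (Z.le_gt_cases p p0). specialize (Ha p Hp H). lia.
      exfalso; apply (Hmax p); auto; lia.
    + exists q. intros p Hp Hpq. destruct (Z.eq_dec p q). lia. exfalso; apply Hno; exists p; split; auto; lia.
Qed.

Lemma legcols_bounded : forall h, hrow x h -> forall p0, legcol x p0 ->
  exists a b, forall p, legcol x p -> a <= p <= b.
Proof.
  intros h Hh p0 Hp0.
  assert (Hup : exists b, forall q, legcol x q -> p0 <= q -> q <= b).
  { destruct (classic (exists q, p0 < q /\ legcol x q)) as [[q [Hq1 Hq2]]|Hno].
    - destruct (M1 h p0 q Hh Hp0 Hq2 Hq1) as [s [Hs HA]].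
      destruct (M3 h p0 s Hh (X_legcol_F h p0 Hh Hp0) HA) as [m [Hm HM]].
      apply (BA h Hh (Z.to_nat (m - h)) p0 m Hp0 HM ltac:(lia) ltac:(lia)).
    - exists p0. intros q Hq Hq0. destruct (Z.eq_dec p0 q). lia. exfalso; apply Hno; exists q; split; auto; lia. }
  assert (Hlo : exists a, forall p, legcol x p -> p <= p0 -> a <= p).
  { destruct (classic (exists p, p < p0 /\ legcol x p)) as [Hex|Hno].
    - destruct (max_below (legcol x) p0 Hex) as [p1 [Hp1 [Hp1l Hmax]]].
      destruct (M1 h p1 p0 Hh Hp1l Hp0 Hp1) as [s [Hs HA]].
      destruct (BB h Hh (Z.to_nat (s - h)) p1 s Hp1l HA ltac:(lia)) as [a Ha].
      exists (Z.min a p0). intros p Hp Hpp0. destruct (Z.eq_dec p p0). lia.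
      destruct (Z.le_gt_cases p p1). specialize (Ha p Hp H). lia.
      exfalso; apply (Hmax p); auto; lia.
    - exists p0. intros p Hp Hpp. destruct (Z.eq_dec p p0). lia. exfalso; apply Hno; exists p; split; auto; lia. }
  destruct Hup as [b Hb]. destruct Hlo as [a Ha].
  exists (Z.min a p0), (Z.max b p0). intros p Hp. destruct (Z.le_gt_cases p p0).
  - specialize (Ha p Hp H). lia.
  - specialize (Hb p Hp ltac:(lia)). lia.
Qed.

Lemma Be_F_between : forall h b b', hrow x h -> x (b,h) = Be -> x (b',h) = Be -> b < b' ->
  exists f, b < f < b' /\ x (f,h) = F.
Proof.
  intros h b b' Hh H1 H2 Hbb. apply NNPP; intro Hn.
  assert (H : forall z, b + 1 <= z -> z < b' -> x (z,h) = Hg).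
  { intros z Hz. apply (Z_ind_up (fun z => z < b' -> x (z,h) = Hg) (b+1)); auto.
    - intros Hb1. destruct (FH_BeHg x Hv b h (or_introl H1)) as [H|H]; auto.
      exfalso; apply Hn; exists (b+1); split; auto; lia.
    - intros z' Hz' IH Hz'b. destruct (FH_BeHg x Hv z' h (or_intror (IH ltac:(lia)))) as [H|H]; auto.
      exfalso; apply Hn; exists (z'+1); split; auto; lia. }
  pose proof (FH_Be_l x Hv (b'-1) h ltac:(replace (b'-1+1) with b' by lia; exact H2)) as H3.
  destruct (Z.eq_dec b (b'-1)) as [E|E].
  - subst b. rewrite H1 in H3; discriminate.
  - rewrite (H (b'-1) ltac:(lia) ltac:(lia)) in H3. discriminate.
Qed.

End St.

Definition hfree (x : config sym) : Prop := forall i j, isH (x (i,j)) = false.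

Section St2.
Variable x : config sym.
Hypothesis Hv : valid x.

Lemma HF_col : hfree x -> forall q, legcol x q -> forall y, isL8 (x (q,y)) = true \/ x (q,y) = Apex \/ x (q,y) = Om.
Proof.
  intros Hf q [y1 Hy1] y.
  assert (Hs : isL8 (x (q,y1)) = true \/ x (q,y1) = Apex).
  { pose proof (Hf q y1). destruct (x (q,y1)); simpl in *; try discriminate; auto. }
  destruct (Z.le_gt_cases y y1) as [Hle|Hgt].
  - destruct (Z.eq_dec y y1) as [E|E]. subst; destruct Hs; auto.
    left. apply (Z_ind_down (fun y => y < y1 -> isL8 (x (q,y)) = true) (y1-1)); try lia.
    + intros _. destruct Hs as [HL|HA].
      * destruct (FV_L8dn x Hv q (y1-1) ltac:(replace (y1-1+1) with y1 by lia; exact HL)) as [H|H]; auto.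
        pose proof (Hf q (y1-1)). rewrite H in H0; discriminate.
      * pose proof (FV_Apexdn x Hv q (y1-1) ltac:(replace (y1-1+1) with y1 by lia; exact HA)) as H.
        destruct (x (q,y1-1)); simpl in H; try discriminate; reflexivity.
    + intros z Hz IH Hz'. destruct (FV_L8dn x Hv q (z-1) ltac:(replace (z-1+1) with z by lia; apply IH; lia)) as [H|H]; auto.
      pose proof (Hf q (z-1)). rewrite H in H0; discriminate.
  - apply (Z_ind_up (fun y => isL8 (x (q,y)) = true \/ x (q,y) = Apex \/ x (q,y) = Om) y1); try lia.
    + destruct Hs; auto.
    + intros z _ [H|[H|H]].
      * destruct (FV_L8up x Hv q z H); auto.
      * right; right. apply (FV_Om x Hv q z); auto.
      * right; right. apply (FV_Om x Hv q z); auto.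
Qed.

Lemma HF_lt_false : hfree x -> forall p q, legcol x p -> legcol x q -> p < q -> False.
Proof.
  intros Hf p q Hp Hq Hpq.
  destruct (classic (exists s, x (p,s) = Apex)) as [[s HA]|Hno].
  - pose proof (FD2 x Hv p (s-1) ltac:(replace (s-1+1) with s by lia; exact HA)) as H0.
    assert (H : forall z, p + 1 <= z -> isHyp (x (z, s - (z - p))) = true).
    { intros z Hz. apply (Z_ind_up (fun z => isHyp (x (z, s - (z - p))) = true) (p+1)); auto.
      - replace (s - (p + 1 - p)) with (s-1) by lia. exact H0.
      - intros z' Hz' IH.
        destruct (FD3 x Hv z' (s - (z' + 1 - p)) ltac:(replace (s - (z'+1-p) + 1) with (s - (z' - p)) by lia; exact IH)) as [H|H].
        + exact H.
        + pose proof (Hf (z'+1) (s - (z'+1-p))). rewrite H in H1; discriminate. }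
    pose proof (H q ltac:(lia)) as Hq'.
    destruct (HF_col Hf q Hq (s - (q - p))) as [H1|[H1|H1]]; [destruct (x (q, s - (q-p))); simpl in *; discriminate|rewrite H1 in Hq'; discriminate|rewrite H1 in Hq'; discriminate].
  - destruct Hp as [y1 Hy1].
    assert (HL : forall y, isL8 (x (p,y)) = true).
    { intro y. destruct (HF_col Hf p (ex_intro _ y1 Hy1) y) as [H|[H|H]]; auto.
      - exfalso; eauto.
      - exfalso.
        assert (Hy1' : isL8 (x (p,y1)) = true).
        { destruct (HF_col Hf p (ex_intro _ y1 Hy1) y1) as [H'|[H'|H']]; auto. exfalso; eauto. rewrite H' in Hy1; discriminate. }
        destruct (Z.le_gt_cases y y1).
        + assert (Hd : forall z, y <= z -> z <= y1 -> x (p,z) = Om).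
          { intros z Hz. apply (Z_ind_up (fun z => z <= y1 -> x (p,z) = Om) y); auto.
            intros z' _ IH Hz'. apply (FV_Om x Hv p z'); right; apply IH; lia. }
          rewrite (Hd y1 ltac:(lia) ltac:(lia)) in Hy1'; discriminate.
        + assert (Hu : forall z, y1 <= z -> isL8 (x (p,z)) = true).
          { intros z Hz. apply (Z_ind_up (fun z => isL8 (x (p,z)) = true) y1); auto.
            intros z' _ IH. destruct (FV_L8up x Hv p z' IH); auto. exfalso; eauto. }
          pose proof (Hu y ltac:(lia)) as Hu'. rewrite H in Hu'. discriminate. }
    destruct Hq as [yq Hyq].
    pose proof (interior_prop x Hv p (yq - 1) (fun y _ => HL y) q ltac:(lia) yq ltac:(lia)) as HI.
    destruct (x (q,yq)); simpl in *; discriminate.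
Qed.

Lemma HF_unique : hfree x -> forall p q, legcol x p -> legcol x q -> p = q.
Proof.
  intros Hf p q Hp Hq. destruct (Z.lt_total p q) as [H|[H|H]]; auto.
  - exfalso; apply (HF_lt_false Hf p q); auto.
  - exfalso; apply (HF_lt_false Hf q p); auto.
Qed.

End St2.

Definition evleft (x : config sym) (c : Z) : Z*Z -> Prop := fun pt => fst pt < c /\ evW (x pt) = true.

Section St3.
Variable x : config sym.
Hypothesis Hv : valid x.

Lemma hrow_unique : forall h i j, hrow x h -> isH (x (i,j)) = true -> j = h.
Proof.
  intros h i j Hh H. destruct (Z.lt_total j h) as [Hl|[He|Hl]]; auto.
  - rewrite (X_below x Hv h Hh i j Hl) in H; discriminate.
  - destruct (X_above x Hv h Hh i j Hl) as [H1 _]. rewrite H in H1; discriminate.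
Qed.

Lemma evW_cases : forall s, evW s = true -> legS s = true \/ s = Be.
Proof. intros s H; destruct s; simpl in H; try discriminate; auto. Qed.

Lemma legS_legcol : forall i j, legS (x (i,j)) = true -> legcol x i.
Proof. intros i j H; exists j; auto. Qed.

Lemma Kbound : forall h a c, hrow x h -> legcol x c -> forall n, exists K, forall i j,
  a <= i < a + Z.of_nat n -> i < c -> legS (x (i,j)) = true -> j <= K.
Proof.
  intros h a c Hh Hc n; induction n as [|n [K HK]].
  - exists 0. intros; lia.
  - destruct (classic (legcol x (a + Z.of_nat n) /\ a + Z.of_nat n < c)) as [[Hl Hlt]|Hno].
    + destruct (M1 x Hv h _ c Hh Hl Hc Hlt) as [s [Hs HA]].
      exists (Z.max K s). intros i j Hi Hic Hj.
      destruct (Z.eq_dec i (a + Z.of_nat n)) as [E|E].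
      * subst i. destruct (Z.le_gt_cases j s). lia.
        rewrite (X_col_Om x Hv _ s (or_introl HA) j H) in Hj; discriminate.
      * rewrite Nat2Z.inj_succ in Hi. specialize (HK i j ltac:(lia) Hic Hj). lia.
    + exists K. intros i j Hi Hic Hj. destruct (Z.eq_dec i (a + Z.of_nat n)) as [E|E].
      * subst i. exfalso. apply Hno. split; auto. exists j; auto.
      * rewrite Nat2Z.inj_succ in Hi. apply (HK i j); auto; lia.
Qed.

Lemma choose_c : exists c, (forall i j, c < i -> legS (x (i,j)) = false) /\ finiteS (evleft x c).
Proof.
  destruct (classic (exists i h, isH (x (i,h)) = true)) as [[i0 [h H0]]|Hnh].
  - assert (Hh : hrow x h) by (exists i0; auto).
    assert (Hbe1 : forall b b', x (b,h) = Be -> x (b',h) = Be -> (forall f, b < f -> f < b' -> ~ legcol x f) -> b' <= b).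
    { intros b b' H1 H2 Hn. destruct (Z.le_gt_cases b' b); auto.
      destruct (Be_F_between x Hv h b b' Hh H1 H2 H) as [f [Hf HF]].
      exfalso. apply (Hn f); try lia. exists h. rewrite HF; reflexivity. }
    destruct (classic (exists p, legcol x p)) as [[p0 Hp0]|Hnl].
    + destruct (legcols_bounded x Hv h Hh p0 Hp0) as [a [b Hab]].
      destruct (max_ex (legcol x) (ex_intro _ p0 Hp0) (ex_intro _ b (fun p Hp => proj2 (Hab p Hp)))) as [c [Hc Hcmax]].
      exists c. split.
      * intros i j Hi. destruct (legS (x (i,j))) eqn:E; auto. exfalso.
        specialize (Hcmax i (legS_legcol i j E)). lia.
      * destruct (Kbound h a c Hh Hc (Z.to_nat (c - a + 1))) as [K HK].
        apply finite_sub with (S2 := fun pt => (a <= fst pt <= c /\ h <= snd pt <= Z.max K h) \/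
                                              (fst pt < a /\ snd pt = h /\ x pt = Be)).
        { apply finite_union. apply box_finite.
          apply finite_atmost1. intros [i j] [i' j'] [Hi [Hj Hb]] [Hi' [Hj' Hb']]; simpl in *. subst j j'.
          f_equal. destruct (Z.lt_total i i') as [Hl|[He|Hl]]; auto.
          - exfalso. destruct (Be_F_between x Hv h i i' Hh Hb Hb' Hl) as [f [Hf HF]].
            assert (Hlf : legcol x f) by (exists h; rewrite HF; reflexivity).
            specialize (Hab f Hlf). lia.
          - exfalso. destruct (Be_F_between x Hv h i' i Hh Hb' Hb Hl) as [f [Hf HF]].
            assert (Hlf : legcol x f) by (exists h; rewrite HF; reflexivity).
            specialize (Hab f Hlf). lia. }
        intros [i j] [Hi He]; simpl in *. destruct (evW_cases _ He) as [Hl|Hb].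
        -- left. pose proof (Hab i (legS_legcol i j Hl)) as Ha.
           assert (h <= j).
           { destruct (Z.le_gt_cases h j); auto. rewrite (X_below x Hv h Hh i j H) in Hl; discriminate. }
           specialize (HK i j ltac:(lia) Hi Hl). lia.
        -- assert (j = h) by (apply (hrow_unique h i j Hh); rewrite Hb; reflexivity). subst j.
           destruct (Z.lt_ge_cases i a). right; auto. left; lia.
    + exists 0. split.
      * intros i j _. destruct (legS (x (i,j))) eqn:E; auto. exfalso; apply Hnl; exists i, j; auto.
      * apply finite_sub with (S2 := fun pt => x pt = Be /\ snd pt = h).
        { apply finite_atmost1. intros [i j] [i' j'] [Hb Hj] [Hb' Hj']; simpl in *. subst j j'.
          f_equal. destruct (Z.lt_total i i') as [Hl|[He|Hl]]; auto; exfalso.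
          - destruct (Be_F_between x Hv h i i' Hh Hb Hb' Hl) as [f [_ HF]]. apply Hnl; exists f, h; rewrite HF; reflexivity.
          - destruct (Be_F_between x Hv h i' i Hh Hb' Hb Hl) as [f [_ HF]]. apply Hnl; exists f, h; rewrite HF; reflexivity. }
        intros [i j] [_ He]; simpl in *. destruct (evW_cases _ He) as [Hl|Hb].
        -- exfalso; apply Hnl; exists i, j; auto.
        -- split; auto. apply (hrow_unique h i j Hh). rewrite Hb; reflexivity.
  - assert (Hf : hfree x).
    { intros i j. destruct (isH (x (i,j))) eqn:E; auto. exfalso; apply Hnh; exists i, j; auto. }
    destruct (classic (exists p, legcol x p)) as [[p0 Hp0]|Hnl].
    + exists p0. split.
      * intros i j Hi. destruct (legS (x (i,j))) eqn:E; auto. exfalso.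
        pose proof (HF_unique x Hv Hf i p0 (legS_legcol i j E) Hp0). lia.
      * exists []. intros [i j] [Hi He]; simpl in *. exfalso. destruct (evW_cases _ He) as [Hl|Hb].
        -- pose proof (HF_unique x Hv Hf i p0 (legS_legcol i j Hl) Hp0). lia.
        -- pose proof (Hf i j). rewrite Hb in H; discriminate.
    + exists 0. split.
      * intros i j _. destruct (legS (x (i,j))) eqn:E; auto. exfalso; apply Hnl; exists i, j; auto.
      * exists []. intros [i j] [Hi He]; simpl in *. exfalso. destruct (evW_cases _ He) as [Hl|Hb].
        -- apply Hnl; exists i, j; auto.
        -- pose proof (Hf i j). rewrite Hb in H; discriminate.
Qed.

End St3.

Definition compatWb (a b c u : sym) : bool :=
  existsb (fun w => match w with (bl,br,tl,tr) => sym_beq br a && sym_beq tl u && sym_beq tr b end) Wl &&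
  existsb (fun w => match w with (bl,br,tl,tr) => sym_beq bl u && sym_beq br b && sym_beq tr c end) Wl.

Definition compatEb (a b c u : sym) : bool :=
  existsb (fun w => match w with (bl,br,tl,tr) => sym_beq bl a && sym_beq tl b && sym_beq tr u end) Wl &&
  existsb (fun w => match w with (bl,br,tl,tr) => sym_beq bl b && sym_beq br u && sym_beq tl c end) Wl.

Lemma detW_ok : forallb (fun a => forallb (fun b => forallb (fun c =>
    Nat.leb (length (filter (fun u => negb (evW u) && compatWb a b c u) syms)) 1) syms) syms) syms = true.
Proof. vm_compute. reflexivity. Qed.

Lemma detE_ok : forallb (fun a => forallb (fun b => forallb (fun c =>
    Nat.leb (length (filter (fun u => negb (legS u) && compatEb a b c u) syms)) 1) syms) syms) syms = true.
Proof. vm_compute. reflexivity. Qed.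

Definition rk (s : sym) : nat :=
  match s with
  | B => 0 | Hg => 1 | F => 2 | Be => 3 | Hl => 4 | Hb => 5 | Tl => 6 | HL => 7 | La => 8 | Mg => 9
  | HX => 10 | Mt => 11 | Tu => 12 | HU => 13 | Up => 14 | Ar => 15 | LLom => 16 | LMom => 17 | LUom => 18
  | LLla => 19 | LMla => 20 | LUaM => 21 | LUup => 22 | LUaA => 23 | Apex => 24 | Om => 25
  end.

Lemma rk_dag : forallb (fun p => sym_beq (fst p) (snd p) || Nat.ltb (rk (fst p)) (rk (snd p))) vpairs = true.
Proof. vm_compute. reflexivity. Qed.

Lemma rk_le : forall s, le (rk s) 25.
Proof. destruct s; simpl; lia. Qed.

Lemma col_step : forall x, valid x -> forall c y, x (c,y) = x (c,y+1) \/ lt (rk (x (c,y))) (rk (x (c,y+1))).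
Proof.
  intros x Hv c y. pose proof (fact_of (fun a b => sym_beq a b || Nat.ltb (rk a) (rk b)) vpairs _ _ rk_dag (valid_v x c y Hv)) as H.
  simpl in H. apply orb_true_iff in H. destruct H as [H|H].
  - left. apply sbeq; auto.
  - right. apply Nat.ltb_lt; auto.
Qed.

Lemma col_mono : forall x, valid x -> forall c y y', y <= y' -> le (rk (x (c,y))) (rk (x (c,y'))).
Proof.
  intros x Hv c y y' H.
  apply (Z_ind_up (fun y' => le (rk (x (c,y))) (rk (x (c,y')))) y); auto.
  intros z _ IH. destruct (col_step x Hv c z) as [E|E]. rewrite <- E; auto. lia.
Qed.

Lemma col_const_up : forall x, valid x -> forall c, exists Y1, forall y, Y1 <= y -> x (c,y) = x (c,Y1).
Proof.
  intros x Hv c.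
  assert (H : forall n y0, le (25 - rk (x (c,y0)))%nat n -> exists Y1, forall y, Y1 <= y -> x (c,y) = x (c,Y1)).
  { induction n; intros y0 Hn.
    - exists y0. intros y Hy. apply (Z_ind_up (fun y => x (c,y) = x (c,y0)) y0); auto.
      intros z Hz IH. destruct (col_step x Hv c z) as [E|E]. rewrite <- E; auto.
      pose proof (col_mono x Hv c y0 z Hz). pose proof (rk_le (x (c,z+1))). lia.
    - destruct (classic (exists y, y0 < y /\ lt (rk (x (c,y0))) (rk (x (c,y))))) as [[y [H1 H2]]|Hno].
      + apply (IHn y). lia.
      + exists y0. intros y Hy. apply (Z_ind_up (fun y => x (c,y) = x (c,y0)) y0); auto.
        intros z Hz IH. destruct (col_step x Hv c z) as [E|E]. rewrite <- E; auto.
        exfalso. apply Hno. exists (z+1). split. lia.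
        pose proof (col_mono x Hv c y0 z Hz). lia. }
  apply (H 25%nat 0). lia.
Qed.

Lemma col_const_down : forall x, valid x -> forall c, exists Y0, forall y, y <= Y0 -> x (c,y) = x (c,Y0).
Proof.
  intros x Hv c.
  assert (H : forall n y0, le (rk (x (c,y0))) n -> exists Y0, forall y, y <= Y0 -> x (c,y) = x (c,Y0)).
  { induction n; intros y0 Hn.
    - exists y0. intros y Hy. apply (Z_ind_down (fun y => x (c,y) = x (c,y0)) y0); auto.
      intros z Hz IH. destruct (col_step x Hv c (z-1)) as [E|E]; replace (z-1+1) with z in E by lia.
      rewrite E; auto.
      pose proof (col_mono x Hv c z y0 Hz). lia.
    - destruct (classic (exists y, y < y0 /\ lt (rk (x (c,y))) (rk (x (c,y0))))) as [[y [H1 H2]]|Hno].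
      + apply (IHn y). lia.
      + exists y0. intros y Hy. apply (Z_ind_down (fun y => x (c,y) = x (c,y0)) y0); auto.
        intros z Hz IH. destruct (col_step x Hv c (z-1)) as [E|E]; replace (z-1+1) with z in E by lia.
        rewrite E; auto.
        exfalso. apply Hno. exists (z-1). split. lia.
        pose proof (col_mono x Hv c z y0 Hz). lia. }
  apply (H (rk (x (c,0))) 0). lia.
Qed.

Definition colset (x : config sym) (c : Z) : Z*Z -> Prop := fun pt =>
  fst pt = c /\ (snd pt = 0 \/ (0 < snd pt /\ x pt <> x (c, snd pt - 1)) \/ (snd pt < 0 /\ x pt <> x (c, snd pt + 1))).

Lemma colset_finite : forall x, valid x -> forall c, finiteS (colset x c).
Proof.
  intros x Hv c. destruct (col_const_up x Hv c) as [Y1 H1]. destruct (col_const_down x Hv c) as [Y0 H0].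
  apply finite_sub with (S2 := fun pt => c <= fst pt <= c /\ Z.min Y0 0 <= snd pt <= Z.max Y1 0).
  apply box_finite.
  intros [i j] [Hi Hj]; simpl in *. subst i. split. lia.
  destruct Hj as [Hj|[[Hj Hn]|[Hj Hn]]].
  - lia.
  - split. lia. destruct (Z.le_gt_cases j Y1); [lia|].
    exfalso. apply Hn. rewrite (H1 j) by lia. rewrite (H1 (j-1)) by lia. reflexivity.
  - split; [|lia]. destruct (Z.le_gt_cases Y0 j); [lia|].
    exfalso. apply Hn. rewrite (H0 j) by lia. rewrite (H0 (j+1)) by lia. reflexivity.
Qed.

Lemma sym_beq_refl : forall s, sym_beq s s = true.
Proof. destruct s; reflexivity. Qed.

Lemma syms_nodup : NoDup syms.
Proof. unfold syms. repeat constructor; simpl; intuition discriminate. Qed.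

Lemma filter_two : forall (P : sym -> bool) u v, P u = true -> P v = true -> u <> v ->
  (2 <= length (filter P syms))%nat.
Proof.
  intros P u v Hu Hv Huv.
  assert (Hnd : NoDup (filter P syms)) by (apply NoDup_filter; apply syms_nodup).
  assert (Hinc : incl [u; v] (filter P syms)).
  { intros w Hw. destruct Hw as [<-|[<-|[]]]; apply (proj2 (filter_In P _ syms)); split; auto; apply syms_all. }
  assert (Hnd2 : NoDup [u; v]).
  { constructor. intros [H|[]]. apply Huv; auto. constructor. intros []. constructor. }
  pose proof (NoDup_incl_length Hnd2 Hinc) as H.
  change (length [u;v]) with 2%nat in H. exact H.
Qed.

Lemma det_from_b : forall (P : sym -> bool) u v, (length (filter P syms) <= 1)%nat -> P u = true -> P v = true -> u = v.
Proof.
  intros P u v Hl Hu Hv. destruct (sym_eq_dec u v); auto.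
  pose proof (filter_two P u v Hu Hv n). lia.
Qed.

Lemma win_in : forall x i j, valid x -> In (x (i,j), x (i+1,j), x (i,j+1), x (i+1,j+1)) Wl.
Proof. intros x i j Hv. apply inW_spec. apply (Hv i j). Qed.

Lemma compatW_x : forall x i j, valid x -> compatWb (x (i,j-1)) (x (i,j)) (x (i,j+1)) (x (i-1,j)) = true.
Proof.
  intros x i j Hv. unfold compatWb. apply andb_true_iff; split; apply existsb_exists.
  - exists (x (i-1,j-1), x (i-1+1,j-1), x (i-1,j-1+1), x (i-1+1,j-1+1)). split. apply win_in; auto.
    replace (i-1+1) with i by lia. replace (j-1+1) with j by lia. rewrite !sym_beq_refl. reflexivity.
  - exists (x (i-1,j), x (i-1+1,j), x (i-1,j+1), x (i-1+1,j+1)). split. apply win_in; auto.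
    replace (i-1+1) with i by lia. rewrite !sym_beq_refl. reflexivity.
Qed.

Lemma compatE_x : forall x i j, valid x -> compatEb (x (i,j-1)) (x (i,j)) (x (i,j+1)) (x (i+1,j)) = true.
Proof.
  intros x i j Hv. unfold compatEb. apply andb_true_iff; split; apply existsb_exists.
  - exists (x (i,j-1), x (i+1,j-1), x (i,j-1+1), x (i+1,j-1+1)). split. apply win_in; auto.
    replace (j-1+1) with j by lia. rewrite !sym_beq_refl. reflexivity.
  - exists (x (i,j), x (i+1,j), x (i,j+1), x (i+1,j+1)). split. apply win_in; auto.
    rewrite !sym_beq_refl. reflexivity.
Qed.

Lemma detW_all : forall a b c, le (length (filter (fun u => negb (evW u) && compatWb a b c u) syms)) 1.
Proof.
  intros a b c. pose proof detW_ok as D.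
  pose proof (proj1 (forallb_forall _ _) D a (syms_all a)) as Da. cbv beta in Da.
  pose proof (proj1 (forallb_forall _ _) Da b (syms_all b)) as Db. cbv beta in Db.
  pose proof (proj1 (forallb_forall _ _) Db c (syms_all c)) as Dc. cbv beta in Dc.
  apply Nat.leb_le. exact Dc.
Qed.

Lemma detE_all : forall a b c, le (length (filter (fun u => negb (legS u) && compatEb a b c u) syms)) 1.
Proof.
  intros a b c. pose proof detE_ok as D.
  pose proof (proj1 (forallb_forall _ _) D a (syms_all a)) as Da. cbv beta in Da.
  pose proof (proj1 (forallb_forall _ _) Da b (syms_all b)) as Db. cbv beta in Db.
  pose proof (proj1 (forallb_forall _ _) Db c (syms_all c)) as Dc. cbv beta in Dc.
  apply Nat.leb_le. exact Dc.
Qed.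

Lemma detW_lem : forall x y i j, valid x -> valid y ->
  x (i,j-1) = y (i,j-1) -> x (i,j) = y (i,j) -> x (i,j+1) = y (i,j+1) ->
  evW (x (i-1,j)) = false -> evW (y (i-1,j)) = false -> x (i-1,j) = y (i-1,j).
Proof.
  intros x y i j Hx Hy E1 E2 E3 N1 N2.
  apply (det_from_b (fun u => negb (evW u) && compatWb (x (i,j-1)) (x (i,j)) (x (i,j+1)) u) _ _ (detW_all _ _ _)).
  - cbv beta. rewrite N1, compatW_x; auto.
  - cbv beta. rewrite N2, E1, E2, E3, compatW_x; auto.
Qed.

Lemma detE_lem : forall x y i j, valid x -> valid y ->
  x (i,j-1) = y (i,j-1) -> x (i,j) = y (i,j) -> x (i,j+1) = y (i,j+1) ->
  legS (x (i+1,j)) = false -> legS (y (i+1,j)) = false -> x (i+1,j) = y (i+1,j).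
Proof.
  intros x y i j Hx Hy E1 E2 E3 N1 N2.
  apply (det_from_b (fun u => negb (legS u) && compatEb (x (i,j-1)) (x (i,j)) (x (i,j+1)) u) _ _ (detE_all _ _ _)).
  - cbv beta. rewrite N1, compatE_x; auto.
  - cbv beta. rewrite N2, E1, E2, E3, compatE_x; auto.
Qed.

Definition compat (x : config sym) (c : Z) (L : list ((Z*Z)*sym)) : Prop :=
  (forall i j, c < i -> legS (x (i,j)) = false) /\
  (forall p s, In (p,s) L -> x p = s) /\
  (forall p, evleft x c p -> In (p, x p) L) /\
  (forall p, colset x c p -> In (p, x p) L).

Lemma compat_uniq : forall x y c L, valid x -> valid y -> compat x c L -> compat y c L -> forall p, x p = y p.
Proof.
  intros x y c L Hx Hy [Rx [Lx [Ex Cx]]] [Ry [Ly [Ey Cy]]].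
  assert (Hcol : forall j, x (c,j) = y (c,j)).
  { assert (H0 : x (c,0) = y (c,0)).
    { symmetry. apply Ly. apply Cx. split; simpl; auto. }
    intro j. destruct (Z.le_gt_cases 0 j).
    - apply (Z_ind_up (fun j => x (c,j) = y (c,j)) 0); auto.
      intros z Hz IH.
      destruct (sym_eq_dec (x (c,z+1)) (x (c,z))) as [E|E].
      + destruct (sym_eq_dec (y (c,z+1)) (y (c,z))) as [E'|E'].
        * rewrite E, E'; auto.
        * apply Lx. apply Cy. split; simpl; auto. right; left. split. lia. replace (z+1-1) with z by lia; auto.
      + symmetry. apply Ly. apply Cx. split; simpl; auto. right; left. split. lia. replace (z+1-1) with z by lia; auto.
    - apply (Z_ind_down (fun j => x (c,j) = y (c,j)) 0); try lia; auto.
      intros z Hz IH.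
      destruct (sym_eq_dec (x (c,z-1)) (x (c,z))) as [E|E].
      + destruct (sym_eq_dec (y (c,z-1)) (y (c,z))) as [E'|E'].
        * rewrite E, E'; auto.
        * apply Lx. apply Cy. split; simpl; auto. right; right. split. lia. replace (z-1+1) with z by lia; auto.
      + symmetry. apply Ly. apply Cx. split; simpl; auto. right; right. split. lia. replace (z-1+1) with z by lia; auto. }
  assert (Hleft : forall n, forall j, x (c - Z.of_nat n, j) = y (c - Z.of_nat n, j)).
  { induction n as [|n IH]; intro j. simpl. rewrite Z.sub_0_r. apply Hcol.
    rewrite Nat2Z.inj_succ. replace (c - Z.succ (Z.of_nat n)) with (c - Z.of_nat n - 1) by lia.
    destruct (evW (x (c - Z.of_nat n - 1, j))) eqn:E1.
    { symmetry. apply Ly. apply Ex. split; simpl; auto. lia. }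
    destruct (evW (y (c - Z.of_nat n - 1, j))) eqn:E2.
    { apply Lx. apply Ey. split; simpl; auto. lia. }
    apply detW_lem; auto. }
  assert (Hright : forall n, forall j, x (c + Z.of_nat n, j) = y (c + Z.of_nat n, j)).
  { induction n as [|n IH]; intro j. simpl. rewrite Z.add_0_r. apply Hcol.
    rewrite Nat2Z.inj_succ. replace (c + Z.succ (Z.of_nat n)) with (c + Z.of_nat n + 1) by lia.
    apply detE_lem; auto. apply Rx; lia. apply Ry; lia. }
  intros [i j]. destruct (Z.le_gt_cases i c).
  - replace i with (c - Z.of_nat (Z.to_nat (c - i))) by lia. apply Hleft.
  - replace i with (c + Z.of_nat (Z.to_nat (i - c))) by lia. apply Hright.
Qed.

Lemma compat_exists : forall x, valid x -> exists c L, compat x c L.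
Proof.
  intros x Hv. destruct (choose_c x Hv) as [c [Hr [l1 Hl1]]].
  destruct (colset_finite x Hv c) as [l2 Hl2].
  exists c, (map (fun p => (p, x p)) (l1 ++ l2)). repeat split; auto.
  - intros p s Hin. apply in_map_iff in Hin. destruct Hin as [q [E _]]. inversion E; subst; auto.
  - intros p Hp. apply (in_map (fun p => (p, x p))). apply in_or_app; left; auto.
  - intros p Hp. apply (in_map (fun p => (p, x p))). apply in_or_app; right; auto.
Qed.

Definition legsym (j S M y : Z) : sym :=
  if y <? S then
    if j =? 1 then (if y <? M then LLom else if y =? M then LMom else LUom)
    else (if y <? M then LLla else if y =? M then LMla else if y =? M + 1 then LUaM
          else if y <? S - 1 then LUup else LUaA)
  else if y =? S then Apex else Om.

Definition cellsym (j S M d y : Z) : sym :=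
  if y <? 0 then B else
  if y =? 0 then (if d =? 0 then F else if d <? S then Hb else if d =? S then Be else Hg) else
  if d =? 0 then legsym j S M y else
  if d + y <? S then (if y <? M then Tl else if y =? M then Mt else Tu)
  else if d + y =? S then (if y <? M then HL else if y =? M then HX else HU)
  else (if y <? M then La else if y =? M then Mg else if y <? S then Up else if y =? S then Ar else Om).

Definition extsym (y : Z) : sym := if y <? 0 then B else if y =? 0 then Hl else Om.

Ltac zify_b H := first [ apply Z.ltb_lt in H | apply Z.ltb_ge in H | apply Z.eqb_eq in H | apply Z.eqb_neq in H ].
Ltac split_if := match goal with |- context [if ?b then _ else _] => let E := fresh "E" in destruct b eqn:E; zify_b E; try (exfalso; lia) end.
Ltac solve_win := unfold cellsym, legsym, extsym; repeat split_if; vm_compute; reflexivity.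

Lemma L_ext : forall y, inW (extsym y, extsym y, extsym (y+1), extsym (y+1)) = true.
Proof. intros. solve_win. Qed.

Lemma L_first : forall S M y, 1 <= M -> M + 2 <= S ->
  inW (extsym y, cellsym 1 S M 0 y, extsym (y+1), cellsym 1 S M 0 (y+1)) = true.
Proof. intros. solve_win. Qed.

Lemma L_in : forall j S M d y, 1 <= j -> 1 <= M -> M + 2 <= S -> (j <> 1 -> M + 4 <= S) -> 0 <= d ->
  inW (cellsym j S M d y, cellsym j S M (d+1) y, cellsym j S M d (y+1), cellsym j S M (d+1) (y+1)) = true.
Proof. intros. solve_win. Qed.

Lemma L_bd : forall j S M D y, 1 <= j -> 2 <= M -> M + 2 <= S -> (j <> 1 -> M + 4 <= S) -> D >= S + 1 ->
  inW (cellsym j S M D y, cellsym (j+1) (S+1) (M-1) 0 y, cellsym j S M D (y+1), cellsym (j+1) (S+1) (M-1) 0 (y+1)) = true.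
Proof. intros. solve_win. Qed.

Fixpoint blk (cs : list Z) (j x : Z) : option (Z*Z) :=
  match cs with
  | [] => None
  | c :: rest => if c <=? x then match blk rest (j+1) x with None => Some (c, j) | Some r => Some r end else None
  end.

Definition Ch (aa bb : Z) (cs : list Z) : config sym := fun v =>
  let (x, y) := v in match blk cs 1 x with None => extsym y | Some (c, j) => cellsym j (aa + j) (bb - j) (x - c) y end.

Fixpoint goodfrom (aa : Z) (cs : list Z) (j0 : Z) : Prop :=
  match cs with
  | [] => True
  | c :: rest => match rest with [] => True | c' :: _ => c' - c >= aa + j0 + 2 end /\ goodfrom aa rest (j0+1)
  end.

Lemma blk_spec : forall aa cs j0 x, 0 <= aa -> 0 <= j0 -> goodfrom aa cs j0 ->
  (blk cs j0 x = None /\ blk cs j0 (x+1) = None) \/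
  (blk cs j0 x = None /\ blk cs j0 (x+1) = Some (x+1, j0) /\ hd_error cs = Some (x+1)) \/
  (exists c j, blk cs j0 x = Some (c,j) /\ blk cs j0 (x+1) = Some (c,j) /\ c <= x /\ j0 <= j /\ j < j0 + Z.of_nat (length cs)) \/
  (exists c j, blk cs j0 x = Some (c,j) /\ blk cs j0 (x+1) = Some (x+1, j+1) /\ x + 1 - c >= aa + j + 2 /\ j0 <= j /\ j + 1 < j0 + Z.of_nat (length cs)).
Proof.
  intros aa cs; induction cs as [|c rest IH]; intros j0 x Haa Hj0 Hg.
  - left; simpl; auto.
  - simpl in Hg. destruct Hg as [Hgap Hg].
    simpl blk. destruct (Z.leb_spec c x) as [Hcx|Hcx].
    + rewrite (proj2 (Z.leb_le c (x+1))) by lia.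
      destruct (IH (j0+1) x Haa ltac:(lia) Hg) as [[H1 H2]|[[H1 [H2 H3]]|[[c1 [j1 [H1 [H2 [H3 [H4 H5]]]]]]|[c1 [j1 [H1 [H2 [H3 [H4 H5]]]]]]]]].
      * right; right; left. exists c, j0. rewrite H1, H2. simpl length; rewrite Nat2Z.inj_succ. repeat split; auto; lia.
      * right; right; right. exists c, j0. rewrite H1, H2.
        destruct rest as [|c' rest']; simpl in H3; [discriminate|]. inversion H3; subst c'.
        simpl length; rewrite Nat2Z.inj_succ. repeat split; try lia.
      * right; right; left. exists c1, j1. rewrite H1, H2. simpl length; rewrite Nat2Z.inj_succ. repeat split; auto; lia.
      * right; right; right. exists c1, j1. rewrite H1, H2. simpl length; rewrite Nat2Z.inj_succ. repeat split; auto; lia.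
    + destruct (Z.leb_spec c (x+1)) as [Hcx1|Hcx1].
      * right; left. assert (c = x + 1) by lia. subst c. split; auto. split; auto.
        destruct rest as [|c' rest']. reflexivity.
        simpl. rewrite (proj2 (Z.leb_gt c' (x+1))) by lia. reflexivity.
      * left; split; auto.
Qed.

Lemma Ch_valid : forall aa bb cs, 2 <= bb -> bb <= aa -> goodfrom aa cs 1 ->
  Z.of_nat (length cs) <= bb - 1 -> valid (Ch aa bb cs).
Proof.
  intros aa bb cs Hbb Haa Hg Hlen i j. unfold win, Ch.
  destruct (blk_spec aa cs 1 i ltac:(lia) ltac:(lia) Hg) as [[H1 H2]|[[H1 [H2 _]]|[[c [k [H1 [H2 [H3 [H4 H5]]]]]]|[c [k [H1 [H2 [H3 [H4 H5]]]]]]]]];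
    rewrite H1, H2.
  - apply L_ext.
  - replace (i + 1 - (i + 1)) with 0 by lia. apply L_first; lia.
  - replace (i + 1 - c) with (i - c + 1) by lia. apply L_in; lia.
  - replace (i + 1 - (i + 1)) with 0 by lia.
    replace (aa + (k + 1)) with (aa + k + 1) by lia. replace (bb - (k + 1)) with (bb - k - 1) by lia.
    apply L_bd; lia.
Qed.

Lemma closed_SFT : closedP (SFT Fs).
Proof.
  intros x Hx. apply SFT_valid. intros i j.
  destruct (Hx (Z.abs i + Z.abs j + 1)) as [y [Hy Ha]].
  apply SFT_valid in Hy.
  unfold win. rewrite !Ha by lia. apply Hy.
Qed.

Lemma blk_app_lt : forall cs c' j0 x, x < c' -> blk (cs ++ [c']) j0 x = blk cs j0 x.
Proof.
  induction cs as [|c rest IH]; intros c' j0 x Hx; simpl.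
  - rewrite (proj2 (Z.leb_gt c' x)) by lia. reflexivity.
  - destruct (c <=? x); auto. rewrite IH; auto.
Qed.

Definition sabs (cs : list Z) : Z := fold_right (fun c acc => Z.abs c + acc) 0 cs.

Lemma sabs_nonneg : forall cs, 0 <= sabs cs.
Proof. induction cs; simpl; lia. Qed.

Lemma sabs_in : forall cs c, In c cs -> c <= sabs cs.
Proof. induction cs as [|a r IH]; simpl; intros c Hin; [contradiction|]. pose proof (sabs_nonneg r) as Hs. destruct Hin as [H|H]. subst; lia. specialize (IH c H); lia. Qed.

Lemma blk_in : forall cs j0 x c j, blk cs j0 x = Some (c, j) -> In c cs /\ c <= x.
Proof.
  induction cs as [|a rest IH]; intros j0 x c j H; simpl in H. discriminate.
  destruct (Z.leb_spec a x); [|discriminate].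
  destruct (blk rest (j0+1) x) as [[c1 j1]|] eqn:E.
  - inversion H; subst. destruct (IH _ _ _ _ E). split; simpl; auto.
  - inversion H; subst. simpl; auto.
Qed.

Lemma last_in : forall (cs : list Z) d, cs <> [] -> In (last cs d) cs.
Proof.
  induction cs as [|a rest IH]; intros d H. congruence.
  destruct rest as [|b r]. simpl; auto. simpl last. right. apply IH. discriminate.
Qed.

Lemma goodfrom_app : forall aa cs j0 c', goodfrom aa cs j0 ->
  (forall c, In c cs -> c' - c >= aa + j0 + Z.of_nat (length cs) + 1) -> goodfrom aa (cs ++ [c']) j0.
Proof.
  intros aa cs; induction cs as [|a rest IH]; intros j0 c' Hg Hc; simpl; auto.
  simpl in Hg. destruct Hg as [Hgap Hg]. split.
  - destruct rest as [|b r]; simpl.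
    + specialize (Hc a (or_introl eq_refl)). simpl in Hc. lia.
    + exact Hgap.
  - apply IH; auto. intros c Hin. specialize (Hc c (or_intror Hin)). simpl length in Hc.
    rewrite Nat2Z.inj_succ in Hc. lia.
Qed.

Lemma blk_app_new : forall cs c' j0, (forall c, In c cs -> c < c') ->
  blk (cs ++ [c']) j0 c' = Some (c', j0 + Z.of_nat (length cs)).
Proof.
  induction cs as [|a rest IH]; intros c' j0 Hc; simpl.
  - rewrite Z.leb_refl. rewrite Z.add_0_r. reflexivity.
  - rewrite (proj2 (Z.leb_le a c')) by (specialize (Hc a (or_introl eq_refl)); lia).
    rewrite IH by (intros; apply Hc; right; auto). rewrite Zpos_P_of_succ_nat. f_equal. f_equal. lia.
Qed.

Lemma Ch_rank : forall aa bb, 2 <= bb -> bb <= aa -> forall n cs, goodfrom aa cs 1 -> cs <> [] ->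
  Z.of_nat (length cs) + Z.of_nat n = bb - 1 -> deriv (SFT Fs) n (Ch aa bb cs).
Proof.
  intros aa bb Hbb Haa n; induction n as [|n IH]; intros cs Hg Hne Hlen.
  - simpl. apply SFT_valid. apply Ch_valid; auto. lia.
  - set (cn := fun N : Z => Z.abs N + sabs cs + aa + Z.of_nat (length cs) + 10).
    assert (Hcn : forall N c, In c cs -> c < cn N).
    { intros N c Hc. pose proof (sabs_in cs c Hc). pose proof (sabs_nonneg cs). unfold cn. lia. }
    assert (Happ : forall N, deriv (SFT Fs) n (Ch aa bb (cs ++ [cn N]))).
    { intro N. apply IH.
      - apply goodfrom_app; auto. intros c Hc. pose proof (sabs_in cs c Hc).
        pose proof (sabs_nonneg cs). unfold cn. lia.
      - destruct cs; simpl; discriminate.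
      - rewrite length_app. simpl length. rewrite Nat2Z.inj_add. simpl. lia. }
    assert (Hag : forall N, agree_box N (Ch aa bb cs) (Ch aa bb (cs ++ [cn N]))).
    { intros N i j Hi Hj. unfold Ch. rewrite blk_app_lt; auto. unfold cn.
      pose proof (sabs_nonneg cs). lia. }
    assert (Hdiff : forall N, Ch aa bb (cs ++ [cn N]) (cn N, 0) <> Ch aa bb cs (cn N, 0)).
    { intro N. unfold Ch. rewrite blk_app_new by (apply Hcn).
      replace (cn N - cn N) with 0 by lia. unfold cellsym; simpl.
      destruct (blk cs 1 (cn N)) as [[c j]|] eqn:E.
      - destruct (blk_in _ _ _ _ _ E) as [Hc _]. specialize (Hcn N c Hc).
        unfold cellsym. simpl.
        destruct (cn N - c =? 0) eqn:E1. apply Z.eqb_eq in E1; lia.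
        destruct (cn N - c <? aa + j); [discriminate|].
        destruct (cn N - c =? aa + j); discriminate.
      - unfold extsym; simpl; discriminate. }
    assert (Hd : deriv (SFT Fs) n (Ch aa bb cs)).
    { apply (deriv_closed _ closed_SFT n). intro N. exists (Ch aa bb (cs ++ [cn N])).
      split; auto. }
    simpl. split; auto.
    intros [_ [N0 HN0]].
    apply (Hdiff N0). apply (HN0 _ (Happ N0) (Hag N0)).
Qed.

Lemma derivs_nonempty : forall n, exists x, deriv (SFT Fs) n x.
Proof.
  intro n. exists (Ch (Z.of_nat n + 2) (Z.of_nat n + 2) [0]).
  apply Ch_rank; [lia|lia|simpl; auto|discriminate|]. change (length [0]) with 1%nat. lia.
Qed.

Definition zdec (n : nat) : Z := let (a, b) := Cantor.of_nat n in Z.of_nat a - Z.of_nat b.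

Lemma zdec_surj : forall z, exists n, zdec n = z.
Proof.
  intro z. exists (Cantor.to_nat (Z.to_nat z, Z.to_nat (- z))). unfold zdec.
  rewrite Cantor.cancel_of_to. lia.
Qed.

Definition ent (n : nat) : (Z*Z)*sym :=
  let (a, r) := Cantor.of_nat n in let (b, c) := Cantor.of_nat r in ((zdec a, zdec b), nth c syms B).

Lemma ent_surj : forall e, exists n, ent n = e.
Proof.
  intros [[i j] s]. destruct (zdec_surj i) as [a Ha]. destruct (zdec_surj j) as [b Hb].
  destruct (In_nth syms s B (syms_all s)) as [c [_ Hc]].
  exists (Cantor.to_nat (a, Cantor.to_nat (b, c))). unfold ent.
  rewrite Cantor.cancel_of_to. rewrite Cantor.cancel_of_to. rewrite Ha, Hb, Hc. reflexivity.
Qed.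

Fixpoint ldec (fuel n : nat) : list ((Z*Z)*sym) :=
  match fuel with
  | O => []
  | S f => match n with O => [] | S m => let (a, b) := Cantor.of_nat m in ent a :: ldec f b end
  end.

Lemma ldec_surj : forall l, exists n, forall f, (n <= f)%nat -> ldec f n = l.
Proof.
  induction l as [|e l [n IH]].
  - exists 0%nat. intros [|f] _; reflexivity.
  - destruct (ent_surj e) as [a Ha]. exists (S (Cantor.to_nat (a, n))).
    intros [|f] Hf. lia. cbn [ldec]. rewrite Cantor.cancel_of_to. rewrite Ha. f_equal. apply IH.
    pose proof (Cantor.to_nat_non_decreasing a n). lia.
Qed.

Definition ddec (n : nat) : Z * list ((Z*Z)*sym) := let (a, b) := Cantor.of_nat n in (zdec a, ldec b b).

Lemma ddec_surj : forall d, exists n, ddec n = d.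
Proof.
  intros [c L]. destruct (zdec_surj c) as [a Ha]. destruct (ldec_surj L) as [b Hb].
  exists (Cantor.to_nat (a, b)). unfold ddec. rewrite Cantor.cancel_of_to. rewrite Ha, Hb; auto.
Qed.

Definition pick (d : Z * list ((Z*Z)*sym)) : config sym :=
  match excluded_middle_informative (exists y, valid y /\ compat y (fst d) (snd d)) with
  | left H => proj1_sig (constructive_indefinite_description _ H)
  | right _ => fun _ => B
  end.

Lemma countable_X : countable_set (SFT Fs).
Proof.
  exists (fun n => pick (ddec n)). intros x Hx. apply SFT_valid in Hx.
  destruct (compat_exists x Hx) as [c [L HL]].
  destruct (ddec_surj (c, L)) as [n Hn]. exists n. rewrite Hn. unfold pick.
  destruct (excluded_middle_informative _) as [H|H].
  - destruct (constructive_indefinite_description _ H) as [y [Hy Hc]]. simpl.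
    intro z. symmetry. apply (compat_uniq x y c L); auto.
  - exfalso; apply H; exists x; auto.
Qed.

Theorem mainTheorem4 :
  exists (A : Type) (F : list (pattern A)),
    finite_type A /\
    countable_set (SFT F) /\
    forall n : nat, ~ (forall x, deriv (SFT F) n x <-> deriv (SFT F) (S n) x).
Proof.
  exists sym, Fs. split. apply fin_sym. split. apply countable_X.
  apply main_generic. apply closed_SFT. apply countable_X. apply derivs_nonempty.
Qed.
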